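(* For each $\lambda\in\mathbb C$ there exists a unique solution $w_\lambda$ of the boundary value problem $\ell(w)=\lambda w$ on $(a,b)$, $\lim_{x\downarrow a}w(x)=1$, $\lim_{x\downarrow a}w^{[1]}(x)=0$. Moreover, for each fixed $x\in(a,b)$, the map $\lambda\mapsto w_\lambda(x)$ is an entire function of exponential type.
   Context: Let $-\infty\le a<b\le\infty$ and let $p,r:(a,b)\to(0,\infty)$ be functions such that $p,p',r,r'$ are locally absolutely continuous on $(a,b)$. Write $\ell u=-\frac{1}{r}(p u')'$ and $u^{[1]}=p u'$. It is assumed that $\int_a^c\int_y^c \frac{dx}{p(x)}\,r(y)\,dy<\infty$ for some $c\in(a,b)$. *)

(* Defs.v *)
From Stdlib Require Import Reals Lra List ClassicalEpsilon.
Open Scope R_scope.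

(** Endpoints: [a : option R] with [None] meaning -infinity,
    [b : option R] with [None] meaning +infinity. *)
Definition inI (a b : option R) (x : R) : Prop :=
  (match a with Some a0 => a0 < x | None => True end) /\
  (match b with Some b0 => x < b0 | None => True end).

Definition Cplx : Type := (R * R)%type.
Definition Cadd (z w : Cplx) : Cplx := (fst z + fst w, snd z + snd w).
Definition Csub (z w : Cplx) : Cplx := (fst z - fst w, snd z - snd w).
Definition Cmul (z w : Cplx) : Cplx :=
  (fst z * fst w - snd z * snd w, fst z * snd w + snd z * fst w).
Definition Cnorm (z : Cplx) : R := sqrt (fst z * fst z + snd z * snd z).
Definition C1 : Cplx := (1, 0).
Definition C0 : Cplx := (0, 0).

(** Absolute continuity on [c,d]: finite families of non-overlapping
    subintervals (listed in increasing order). *)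
Fixpoint nonoverlap (l : list (R * R)) : Prop :=
  match l with
  | nil => True
  | i :: t =>
      fst i <= snd i /\
      match t with
      | nil => True
      | j :: _ => snd i <= fst j
      end /\ nonoverlap t
  end.

Fixpoint total_length (l : list (R * R)) : R :=
  match l with nil => 0 | i :: t => (snd i - fst i) + total_length t end.

Fixpoint total_var (f : R -> R) (l : list (R * R)) : R :=
  match l with nil => 0 | i :: t => Rabs (f (snd i) - f (fst i)) + total_var f t end.

Definition abs_cont_on (f : R -> R) (c d : R) : Prop :=
  forall eps, 0 < eps -> exists delta, 0 < delta /\
    forall l : list (R * R),
      (forall i, In i l -> c <= fst i /\ snd i <= d) ->
      nonoverlap l ->
      total_length l < delta -> total_var f l < eps.

Definition loc_abs_cont (a b : option R) (f : R -> R) : Prop :=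
  forall c d, inI a b c -> inI a b d -> c <= d -> abs_cont_on f c d.

Definition loc_AC_with_AC_deriv (a b : option R) (f : R -> R) : Prop :=
  loc_abs_cont a b f /\
  exists f' : R -> R,
    (forall x, inI a b x -> derivable_pt_lim f x (f' x)) /\ loc_abs_cont a b f'.

Definition Rint (f : R -> R) (u v : R) : R :=
  epsilon (inhabits 0)
    (fun I => exists pr : Riemann_integrable f u v, RiemannInt pr = I).

(** The hypothesis  int_a^c int_y^c dx/p(x) r(y) dy < infinity,
    as boundedness of the (nonnegative-integrand) partial integrals. *)
Definition integrability_hyp (a b : option R) (p r : R -> R) : Prop :=
  exists c, inI a b c /\ exists M : R,
    forall t, inI a b t -> t <= c ->
      Rint (fun y => Rint (fun x => / p x) y c * r y) t c <= M.

(** w solves  l(w) = lam w  on (a,b), where l u = -(1/r)(p u')',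
    with dw the derivative of w (so p*dw is the quasi-derivative w^[1]). *)
Definition solves (a b : option R) (p r : R -> R) (lam : Cplx)
  (w dw : R -> Cplx) : Prop :=
  forall x, inI a b x ->
    derivable_pt_lim (fun t => fst (w t)) x (fst (dw x)) /\
    derivable_pt_lim (fun t => snd (w t)) x (snd (dw x)) /\
    derivable_pt_lim (fun t => p t * fst (dw t)) x (- (r x * fst (Cmul lam (w x)))) /\
    derivable_pt_lim (fun t => p t * snd (dw t)) x (- (r x * snd (Cmul lam (w x)))).

Definition lim_at_left_end (a b : option R) (f : R -> Cplx) (L : Cplx) : Prop :=
  forall eps, 0 < eps -> exists t, inI a b t /\
    forall x, inI a b x -> x < t -> Cnorm (Csub (f x) L) < eps.

Definition solves_bvp (a b : option R) (p r : R -> R) (lam : Cplx)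
  (w : R -> Cplx) : Prop :=
  exists dw : R -> Cplx,
    solves a b p r lam w dw /\
    lim_at_left_end a b w C1 /\
    lim_at_left_end a b (fun x => (p x * fst (dw x), p x * snd (dw x))) C0.

Definition entire (f : Cplx -> Cplx) : Prop :=
  forall z, exists f'z : Cplx,
    forall eps, 0 < eps -> exists delta, 0 < delta /\
      forall h, h <> C0 -> Cnorm h < delta ->
        Cnorm (Csub (Csub (f (Cadd z h)) (f z)) (Cmul f'z h)) <= eps * Cnorm h.

Definition exponential_type (f : Cplx -> Cplx) : Prop :=
  exists A B : R, forall z, Cnorm (f z) <= A * exp (B * Cnorm z).

(* Main.v *)
Require Import Defs.
From Stdlib Require Import Reals Lra Lia Classical Factorial ClassicalEpsilon Ranalysis5.
From Coquelicot Require Import Coquelicot.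
Require Import Defs.
Open Scope R_scope.

Lemma inI_conv a b x y z : inI a b x -> inI a b y -> x <= z <= y -> inI a b z.
Proof.
  unfold inI; destruct a as [a0|], b as [b0|]; intuition lra.
Qed.

Lemma inI_conv2 a b x y z : inI a b x -> inI a b y -> Rmin x y <= z <= Rmax x y -> inI a b z.
Proof.
  intros Hx Hy Hz. unfold Rmin, Rmax in Hz. destruct (Rle_dec x y).
  - exact (inI_conv a b x y z Hx Hy Hz).
  - apply (inI_conv a b y x z Hy Hx). lra.
Qed.

Lemma inI_open a b x : inI a b x -> exists d, 0 < d /\ forall y, Rabs (y - x) < d -> inI a b y.
Proof.
  unfold inI; destruct a as [a0|], b as [b0|]; intros [H1 H2].
  - exists (Rmin (x - a0) (b0 - x)). split. apply Rmin_glb_lt; lra.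
    intros y Hy. pose proof (Rmin_l (x - a0) (b0 - x)). pose proof (Rmin_r (x - a0) (b0 - x)).
    apply Rabs_def2 in Hy. lra.
  - exists (x - a0). split. lra. intros y Hy. apply Rabs_def2 in Hy. lra.
  - exists (b0 - x). split. lra. intros y Hy. apply Rabs_def2 in Hy. lra.
  - exists 1. split. lra. intros; tauto.
Qed.

Lemma inI_left a b x : inI a b x -> exists t, inI a b t /\ t < x.
Proof.
  intros H. destruct (inI_open _ _ _ H) as [d [Hd Hy]].
  exists (x - d/2). split; [|lra]. apply Hy. rewrite Rabs_left; lra.
Qed.

Lemma inI_right a b x : inI a b x -> exists t, inI a b t /\ x < t.
Proof.
  intros H. destruct (inI_open _ _ _ H) as [d [Hd Hy]].
  exists (x + d/2). split; [|lra]. apply Hy. rewrite Rabs_right; lra.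
Qed.

Lemma inI_locally a b x : inI a b x -> locally x (fun y => inI a b y).
Proof.
  intros H. destruct (inI_open _ _ _ H) as [d [Hd Hy]].
  exists (mkposreal d Hd). intros y Hy'. apply Hy. exact Hy'.
Qed.

Lemma ex_RInt_I a b (f : R -> R) t s : (forall x, inI a b x -> continuous f x) ->
  inI a b t -> inI a b s -> ex_RInt f t s.
Proof.
  intros Hc Ht Hs. apply (@ex_RInt_continuous R_CompleteNormedModule). intros z Hz. apply Hc.
  eapply inI_conv2; [exact Ht|exact Hs|exact Hz].
Qed.

Lemma derive_RInt_I a b (f : R -> R) t x : (forall x, inI a b x -> continuous f x) ->
  inI a b t -> inI a b x -> is_derive (fun s => RInt f t s) x (f x).
Proof.
  intros Hc Ht Hx. apply is_derive_RInt with (a := t).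
  - generalize (inI_locally _ _ _ Hx). apply filter_imp. intros y Hy.
    apply (@RInt_correct R_CompleteNormedModule). apply (ex_RInt_I a b); auto.
  - auto.
Qed.

Lemma derive_RInt_I' a b (f : R -> R) t x : (forall x, inI a b x -> continuous f x) ->
  inI a b t -> inI a b x -> is_derive (fun s => RInt f s t) x (- f x).
Proof.
  intros Hc Ht Hx. apply (is_derive_RInt' f (fun s => RInt f s t) x t).
  - generalize (inI_locally _ _ _ Hx). apply filter_imp. intros y Hy.
    apply (@RInt_correct R_CompleteNormedModule). apply (ex_RInt_I a b); auto.
  - auto.
Qed.

Lemma FTC_I a b (G g : R -> R) t x :
  (forall y, inI a b y -> is_derive G y (g y)) ->
  (forall y, inI a b y -> continuous g y) ->
  inI a b t -> inI a b x -> RInt g t x = G x - G t.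
Proof.
  intros HD Hc Ht Hx. apply is_RInt_unique.
  apply (is_RInt_derive G g t x).
  - intros z0 Hz. apply HD. exact (inI_conv2 a b t x z0 Ht Hx Hz).
  - intros z0 Hz. apply Hc. exact (inI_conv2 a b t x z0 Ht Hx Hz).
Qed.

Lemma deriv_cont (f : R -> R) x l : is_derive f x l -> continuous f x.
Proof. intros H. apply (@ex_derive_continuous R_AbsRing R_NormedModule). exists l; exact H. Qed.

Lemma RInt_le_I a b (f : R -> R) g t x : (forall x, inI a b x -> continuous f x) ->
  (forall x, inI a b x -> continuous g x) -> inI a b t -> inI a b x -> t <= x ->
  (forall y, inI a b y -> t <= y <= x -> f y <= g y) -> RInt f t x <= RInt g t x.
Proof.
  intros Hf Hg Ht Hx Htx H. apply RInt_le; auto. apply (ex_RInt_I a b); auto.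
  apply (ex_RInt_I a b); auto. intros y Hy. apply H. apply (inI_conv a b t x y Ht Hx). lra. lra.
Qed.

Lemma RInt_ge0_I a b (f : R -> R) t x : (forall x, inI a b x -> continuous f x) ->
  inI a b t -> inI a b x -> t <= x ->
  (forall y, inI a b y -> t <= y <= x -> 0 <= f y) -> 0 <= RInt f t x.
Proof.
  intros Hf Ht Hx Htx H. apply RInt_ge_0; auto. apply (ex_RInt_I a b); auto.
  intros y Hy. apply H. apply (inI_conv a b t x y Ht Hx). lra. lra.
Qed.

Lemma Chasles_I a b (f : R -> R) t s x : (forall x, inI a b x -> continuous f x) ->
  inI a b t -> inI a b s -> inI a b x -> RInt f t x = RInt f t s + RInt f s x.
Proof.
  intros Hf Ht Hs Hx. symmetry. apply (RInt_Chasles f t s x); apply (ex_RInt_I a b); auto.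
Qed.

Lemma cmul (f g : R -> R) x : continuous f x -> continuous g x -> continuous (fun y => f y * g y) x.
Proof. apply (@continuous_mult R_UniformSpace R_AbsRing f g x). Qed.
Lemma cplus (f g : R -> R) x : continuous f x -> continuous g x -> continuous (fun y => f y + g y) x.
Proof. apply (@continuous_plus R_UniformSpace R_AbsRing R_NormedModule f g x). Qed.
Lemma cminus (f g : R -> R) x : continuous f x -> continuous g x -> continuous (fun y => f y - g y) x.
Proof. apply (@continuous_minus R_UniformSpace R_AbsRing R_NormedModule f g x). Qed.
Lemma copp (f : R -> R) x : continuous f x -> continuous (fun y => - f y) x.
Proof. apply (@continuous_opp R_UniformSpace R_AbsRing R_NormedModule f x). Qed.
Lemma cconst (k : R) x : continuous (fun _ : R => k) x.
Proof. apply (@continuous_const R_UniformSpace R_UniformSpace k x). Qed.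
Lemma cinv (f : R -> R) x : continuous f x -> f x <> 0 -> continuous (fun y => / f y) x.
Proof. apply continuous_Rinv_comp. Qed.
Lemma cdiv (f g : R -> R) x : continuous f x -> continuous g x -> g x <> 0 -> continuous (fun y => f y / g y) x.
Proof. intros. unfold Rdiv. apply cmul; auto. apply cinv; auto. Qed.
Lemma cpow (f : R -> R) n x : continuous f x -> continuous (fun y => f y ^ n) x.
Proof. intros H. induction n. simpl. apply cconst. simpl. apply cmul; auto. Qed.
Lemma cabs (f : R -> R) x : continuous f x -> continuous (fun y => Rabs (f y)) x.
Proof. apply continuous_Rabs_comp. Qed.

Lemma dmul (f g : R -> R) x df dg : is_derive f x df -> is_derive g x dg ->
  is_derive (fun y => f y * g y) x (df * g x + f x * dg).
Proof.
  intros H1 H2. apply is_derive_Reals. apply is_derive_Reals in H1. apply is_derive_Reals in H2.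
  exact (derivable_pt_lim_mult f g x df dg H1 H2).
Qed.
Lemma dplus (f g : R -> R) x df dg : is_derive f x df -> is_derive g x dg ->
  is_derive (fun y => f y + g y) x (df + dg).
Proof.
  intros H1 H2. apply is_derive_Reals. apply is_derive_Reals in H1. apply is_derive_Reals in H2.
  exact (derivable_pt_lim_plus f g x df dg H1 H2).
Qed.
Lemma dconst (k : R) x : is_derive (fun _ : R => k) x 0.
Proof. apply is_derive_Reals. apply (derivable_pt_lim_const k x). Qed.
Lemma dpow (f : R -> R) n x df : is_derive f x df ->
  is_derive (fun y => f y ^ n) x (INR n * df * f x ^ pred n).
Proof. apply is_derive_pow. Qed.
Lemma dscal (f : R -> R) k x df : is_derive f x df -> is_derive (fun y => k * f y) x (k * df).
Proof.
  intros H. replace (k * df) with (0 * f x + k * df) by ring. apply (dmul (fun _ => k) f); auto.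
  apply dconst.
Qed.
Lemma dext (f g : R -> R) x l : (forall y, f y = g y) -> is_derive f x l -> is_derive g x l.
Proof.
  intros E H. apply (is_derive_ext f g); auto.
Qed.
Lemma dext_I a b (f g : R -> R) x l : inI a b x -> (forall y, inI a b y -> f y = g y) ->
  is_derive f x l -> is_derive g x l.
Proof.
  intros Hx E H. apply (is_derive_ext_loc f g); auto.
  generalize (inI_locally a b x Hx). apply filter_imp. auto.
Qed.
Lemma dcont (f : R -> R) x l : is_derive f x l -> continuous f x.
Proof. apply deriv_cont. Qed.
Lemma RInt_scalR (f : R -> R) k t s : ex_RInt f t s -> RInt (fun y => k * f y) t s = k * RInt f t s.
Proof. intros H. exact (RInt_scal f t s k H). Qed.
Lemma RInt_minusR (f g : R -> R) t s : ex_RInt f t s -> ex_RInt g t s ->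
  RInt (fun y => f y - g y) t s = RInt f t s - RInt g t s.
Proof. intros H1 H2. exact (RInt_minus f g t s H1 H2). Qed.
Lemma RInt_plusR (f g : R -> R) t s : ex_RInt f t s -> ex_RInt g t s ->
  RInt (fun y => f y + g y) t s = RInt f t s + RInt g t s.
Proof. intros H1 H2. exact (RInt_plus f g t s H1 H2). Qed.
Lemma cont_nbhd (f : R -> R) x eps : continuous f x -> 0 < eps -> exists d, 0 < d /\ forall y, Rabs (y - x) < d -> Rabs (f y - f x) < eps.
Proof.
  intros Hc He.
  assert (H : locally x (fun y => Rabs (f y - f x) < eps)).
  { apply (Hc (fun u => Rabs (u - f x) < eps)). exists (mkposreal eps He). intros u Hu. exact Hu. }
  destruct H as [d Hd]. exists d. split. apply cond_pos. intros y Hy. apply Hd. exact Hy.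
Qed.


Lemma lub_fin (E : R -> Prop) y0 B : E y0 -> (forall y, E y -> y <= B) ->
  exists l, real (Lub_Rbar E) = l /\ (forall y, E y -> y <= l) /\ l <= B /\
    (forall eps, 0 < eps -> exists y, E y /\ l - eps < y).
Proof.
  intros H0 HB. destruct (Lub_Rbar_correct E) as [Hub Hlub].
  destruct (Lub_Rbar E) as [l| |] eqn:El.
  - exists l. simpl. split; [reflexivity|]. split; [intros y Hy; exact (Hub y Hy)|].
    split. { assert (Hb : is_ub_Rbar E B) by (intros y Hy; simpl; apply HB; auto).
             exact (Hlub B Hb). }
    intros eps Heps. apply NNPP. intros Hn.
    assert (Hb : is_ub_Rbar E (l - eps)).
    { intros y Hy. simpl. apply Rnot_lt_le. intros Hlt. apply Hn. exists y. auto. }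
    specialize (Hlub _ Hb). simpl in Hlub. lra.
  - exfalso. assert (Hb : is_ub_Rbar E B) by (intros y Hy; simpl; apply HB; auto).
    specialize (Hlub _ Hb). simpl in Hlub. exact Hlub.
  - exfalso. specialize (Hub y0 H0). simpl in Hub. exact Hub.
Qed.

Section IAsec.
Variables a b : option R.

Definition SetI (f : R -> R) x := fun y => exists t, inI a b t /\ t <= x /\ y = RInt f t x.
Definition IA (f : R -> R) x := real (Lub_Rbar (SetI f x)).
Definition Bdd (f : R -> R) x := exists B, forall t, inI a b t -> t <= x -> RInt f t x <= B.
Definition Good (f : R -> R) := (forall x, inI a b x -> continuous f x) /\
  (forall x, inI a b x -> 0 <= f x) /\ (forall x, inI a b x -> Bdd f x).

Lemma IA_props f x : inI a b x -> Bdd f x ->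
  (forall t, inI a b t -> t <= x -> RInt f t x <= IA f x) /\
  (forall B, (forall t, inI a b t -> t <= x -> RInt f t x <= B) -> IA f x <= B) /\
  (forall eps, 0 < eps -> exists t, inI a b t /\ t <= x /\ IA f x - eps < RInt f t x).
Proof.
  intros Hx [B HB].
  assert (H0 : SetI f x (RInt f x x)) by (exists x; split; [auto|split;[lra|auto]]).
  assert (HB' : forall y, SetI f x y -> y <= B) by (intros y [t [Ht [Htx ->]]]; auto).
  destruct (lub_fin _ _ _ H0 HB') as [l [El [Hl1 [Hl2 Hl3]]]].
  unfold IA; rewrite El. split; [|split].
  - intros t Ht Htx. apply Hl1. exists t; auto.
  - intros B' HB2. destruct (lub_fin _ _ B' H0) as [l' [El' [_ [Hl' _]]]].
    { intros y [t [Ht [Htx ->]]]; auto. }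
    rewrite El in El'. subst. exact Hl'.
  - intros eps Heps. destruct (Hl3 eps Heps) as [y [[t [Ht [Htx ->]]] Hy]]. exists t; auto.
Qed.

Lemma IA_le f x B : inI a b x ->
  (forall t, inI a b t -> t <= x -> RInt f t x <= B) -> IA f x <= B.
Proof.
  intros Hx HB. apply (IA_props f x Hx). exists B; auto. auto.
Qed.

Lemma IA_ge f x t : inI a b x -> Bdd f x -> inI a b t -> t <= x -> RInt f t x <= IA f x.
Proof. intros Hx HB. apply (IA_props f x Hx HB). Qed.

Lemma IA_approx f x : inI a b x -> Bdd f x -> forall eps, 0 < eps ->
  exists t, inI a b t /\ t <= x /\ IA f x - eps < RInt f t x.
Proof. intros Hx HB. apply (IA_props f x Hx HB). Qed.

Lemma IA_nonneg f x : Good f -> inI a b x -> 0 <= IA f x.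
Proof.
  intros [Hc [Hn HB]] Hx. replace 0 with (RInt f x x) by (rewrite RInt_point; reflexivity). apply IA_ge; auto. lra.
Qed.

Lemma Bdd_all f x0 : (forall x, inI a b x -> continuous f x) ->
  (forall x, inI a b x -> 0 <= f x) -> inI a b x0 -> Bdd f x0 -> Good f.
Proof.
  intros Hc Hn Hx0 [B HB]. split; [auto|split;[auto|]]. intros x Hx.
  exists (Rabs B + Rabs (RInt f x0 x)). intros t Ht Htx.
  destruct (Rle_dec t x0).
  - rewrite (Chasles_I a b f t x0 x) by auto. specialize (HB t Ht r).
    pose proof (Rle_abs B). pose proof (Rle_abs (RInt f x0 x)). lra.
  - rewrite (Chasles_I a b f x0 t x) in * by auto.
    assert (0 <= RInt f x0 t) by (apply (RInt_ge0_I a b); auto; try lra; intros; apply Hn; auto).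
    pose proof (Rle_abs B). pose proof (Rabs_pos (RInt f x0 x)).
    pose proof (Rle_abs (RInt f x0 t + RInt f t x)). pose proof (Rabs_pos B). lra.
Qed.

Lemma IA_chasles f x y : Good f -> inI a b x -> inI a b y -> y <= x ->
  IA f x = IA f y + RInt f y x.
Proof.
  intros Hg Hx Hy Hyx. pose proof Hg as [Hc [Hn HB]].
  pose proof (IA_nonneg f y Hg Hy).
  apply Rle_antisym.
  - apply IA_le; auto. intros t Ht Htx. destruct (Rle_dec t y).
    + rewrite (Chasles_I a b f t y x) by auto.
      pose proof (IA_ge f y t Hy (HB y Hy) Ht r). lra.
    + rewrite (Chasles_I a b f y t x) in * by auto.
      assert (0 <= RInt f y t) by (apply (RInt_ge0_I a b); auto; try lra; intros; apply Hn; auto).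
      lra.
  - apply Rnot_lt_le. intros Hlt.
    destruct (IA_approx f y Hy (HB y Hy) (IA f y + RInt f y x - IA f x)) as [t [Ht [Hty Ha]]]. lra.
    pose proof (IA_ge f x t Hx (HB x Hx) Ht ltac:(lra)).
    rewrite (Chasles_I a b f t y x) in H0 by auto. lra.
Qed.

Lemma IA_chasles2 f x y : Good f -> inI a b x -> inI a b y ->
  IA f x = IA f y + RInt f y x.
Proof.
  intros Hg Hx Hy. destruct (Rle_dec y x). apply IA_chasles; auto.
  rewrite (IA_chasles f y x) by (auto; lra).
  rewrite <- (opp_RInt_swap f). unfold opp; simpl. ring.
  apply (ex_RInt_I a b); auto. apply Hg.
Qed.

Lemma IA_deriv f x : Good f -> inI a b x -> is_derive (IA f) x (f x).
Proof.
  intros Hg Hx. destruct (inI_left a b x Hx) as [y [Hy _]].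
  apply (is_derive_ext_loc (fun z => IA f y + RInt f y z)).
  - generalize (inI_locally a b x Hx). apply filter_imp. intros z Hz.
    symmetry. apply IA_chasles2; auto.
  - replace (f x) with (plus 0 (f x)) by (unfold plus; simpl; ring).
    apply (@is_derive_plus R_AbsRing R_NormedModule). apply (@is_derive_const R_AbsRing R_NormedModule).
    apply (derive_RInt_I a b); auto. apply Hg.
Qed.

Lemma IA_lim0 f x0 : Good f -> inI a b x0 -> forall eps, 0 < eps ->
  exists t, inI a b t /\ forall x, inI a b x -> x < t -> IA f x < eps.
Proof.
  intros Hg Hx0 eps Heps. pose proof Hg as [Hc [Hn HB]].
  destruct (IA_approx f x0 Hx0 (HB x0 Hx0) eps Heps) as [t0 [Ht0 [Ht0x Ha]]].
  exists t0. split; auto. intros x Hx Hxt.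
  rewrite (IA_chasles f x0 x Hg Hx0 Hx ltac:(lra)) in Ha.
  rewrite (Chasles_I a b f x t0 x0) in Ha by auto.
  assert (0 <= RInt f x t0) by (apply (RInt_ge0_I a b); auto; try lra; intros; apply Hn; auto).
  lra.
Qed.

End IAsec.


Lemma exR_le (u M : nat -> R) : (forall n, Rabs (u n) <= M n) -> ex_series M -> ex_series u.
Proof.
  intros H HM. apply ex_series_Rabs.
  apply (@ex_series_le R_AbsRing R_CompleteNormedModule (fun n => Rabs (u n)) M); auto.
  intros n. unfold norm; simpl. rewrite Rabs_Rabsolu. auto.
Qed.

Lemma SerR_le (u M : nat -> R) : (forall n, Rabs (u n) <= M n) -> ex_series M ->
  Rabs (Series u) <= Series M.
Proof.
  intros H HM. assert (E : ex_series (fun n => Rabs (u n))).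
  { apply (@ex_series_le R_AbsRing R_CompleteNormedModule (fun n => Rabs (u n)) M); auto.
    intros n. unfold norm; simpl. rewrite Rabs_Rabsolu. auto. }
  eapply Rle_trans. apply Series_Rabs; auto. apply Series_le; auto. intros n; split; auto. apply Rabs_pos.
Qed.

Lemma exR_ext (u v : nat -> R) : (forall n, u n = v n) -> ex_series u -> ex_series v.
Proof. apply (@ex_series_ext R_AbsRing R_NormedModule). Qed.

Lemma exR_shift (u : nat -> R) : ex_series u -> ex_series (fun n => u (S n)).
Proof. intros H. apply (@ex_series_incr_1 R_AbsRing R_NormedModule u). auto. Qed.

Lemma exR_scal (u : nat -> R) k : ex_series u -> ex_series (fun n => k * u n).
Proof. intros H. apply (@ex_series_scal_l R_AbsRing R_NormedModule k u H). Qed.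

Lemma exR_plus (u v : nat -> R) : ex_series u -> ex_series v -> ex_series (fun n => u n + v n).
Proof. intros H1 H2. apply (@ex_series_plus R_AbsRing R_NormedModule u v H1 H2). Qed.

Lemma is_series_exp y : is_series (fun n => y ^ n / INR (fact n)) (exp y).
Proof.
  generalize (is_exp_Reals y). unfold is_pseries. apply is_series_ext.
  intros n. rewrite pow_n_pow. unfold scal; simpl. unfold mult; simpl. unfold Rdiv. reflexivity.
Qed.

Lemma ex_exp y : ex_series (fun n => y ^ n / INR (fact n)).
Proof. exists (exp y). apply is_series_exp. Qed.

Lemma Series_exp y : Series (fun n => y ^ n / INR (fact n)) = exp y.
Proof. apply is_series_unique. apply is_series_exp. Qed.

Lemma sum_cont (g : nat -> R -> R) y N : (forall n, continuous (g n) y) ->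
  continuity_pt (fun z => sum_f_R0 (fun n => g n z) N) y.
Proof.
  intros H. induction N.
  - simpl. apply continuity_pt_filterlim. apply H.
  - simpl. apply (continuity_pt_plus (fun z => sum_f_R0 (fun n => g n z) N) (fun z => g (S N) z)); auto.
    apply continuity_pt_filterlim. apply H.
Qed.

Lemma sum_der (f g : nat -> R -> R) y N : (forall n, derivable_pt_lim (f n) y (g n y)) ->
  derivable_pt_lim (fun z => sum_f_R0 (fun n => f n z) N) y (sum_f_R0 (fun n => g n y) N).
Proof.
  intros H. induction N.
  - simpl. apply H.
  - simpl. apply (derivable_pt_lim_plus (fun z => sum_f_R0 (fun n => f n z) N) (fun z => f (S N) z)); auto.
Qed.

Lemma tail_bound (u M : nat -> R) N : (forall n, Rabs (u n) <= M n) -> ex_series M ->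
  Rabs (Series u - sum_f_R0 u N) <= Series M - sum_f_R0 M N.
Proof.
  intros H HM. pose proof (exR_le u M H HM) as Hu.
  rewrite (Series_incr_n u (S N)) by (auto; lia).
  rewrite (Series_incr_n M (S N)) by (auto; lia). simpl pred.
  replace (sum_f_R0 u N + Series (fun k => u (S N + k)%nat) - sum_f_R0 u N) with
    (Series (fun k => u (S N + k)%nat)) by ring.
  replace (sum_f_R0 M N + Series (fun k => M (S N + k)%nat) - sum_f_R0 M N) with
    (Series (fun k => M (S N + k)%nat)) by ring.
  apply SerR_le. auto. apply (@ex_series_incr_n R_AbsRing R_NormedModule M (S N)). auto.
Qed.

Lemma TD (f g : nat -> R -> R) (x d : R) (Mb : nat -> R) :
  0 < d ->
  (forall n y, Rabs (y - x) < d -> derivable_pt_lim (f n) y (g n y)) ->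
  (forall n y, Rabs (y - x) < d -> continuous (g n) y) ->
  (forall n y, Rabs (y - x) < d -> Rabs (g n y) <= Mb n) -> ex_series Mb ->
  (forall y, Rabs (y - x) < d -> ex_series (fun n => f n y)) ->
  derivable_pt_lim (fun y => Series (fun n => f n y)) x (Series (fun n => g n x)).
Proof.
  intros Hd HD HC HB HMb Hf.
  set (rr := mkposreal d Hd).
  apply (derivable_pt_lim_CVU (fun N y => sum_f_R0 (fun n => f n y) N)
           (fun N y => sum_f_R0 (fun n => g n y) N) _ (fun y => Series (fun n => g n y)) x x rr).
  - unfold Boule; simpl. rewrite Rminus_diag, Rabs_R0. auto.
  - intros y N Hy. apply sum_der. intros n. apply HD. exact Hy.
  - intros y Hy. pose proof (Series_correct _ (Hf y Hy)) as H. apply is_series_Reals in H. exact H.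
  - intros eps Heps.
    pose proof (Series_correct _ HMb) as H. apply is_series_Reals in H.
    destruct (H eps Heps) as [N HN]. exists N. intros n y Hn Hy.
    apply Rle_lt_trans with (Series Mb - sum_f_R0 Mb n).
    + apply tail_bound; [intros k; apply HB; exact Hy | exact HMb].
    + specialize (HN n Hn). unfold Rdist in HN. apply Rabs_def2 in HN. lra.
  - intros y Hy. apply (CVU_continuity (fun N y => sum_f_R0 (fun n => g n y) N) _ x rr).
    + intros eps Heps.
      pose proof (Series_correct _ HMb) as H. apply is_series_Reals in H.
      destruct (H eps Heps) as [N HN]. exists N. intros n z Hn Hz.
      apply Rle_lt_trans with (Series Mb - sum_f_R0 Mb n).
      * apply tail_bound; [intros k; apply HB; exact Hz | exact HMb].
      * specialize (HN n Hn). unfold Rdist in HN. apply Rabs_def2 in HN. lra.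
    + intros N z Hz. apply sum_cont. intros n. apply HC. exact Hz.
    + exact Hy.
Qed.
Lemma exR_minus (u v : nat -> R) : ex_series u -> ex_series v -> ex_series (fun n => u n - v n).
Proof.
  intros H1 H2. apply (exR_ext (fun n => u n + (-1) * v n)). intros; ring.
  apply exR_plus; auto. apply exR_scal; auto.
Qed.


Fixpoint cp (z : Cplx) (n : nat) : Cplx :=
  match n with O => Defs.C1 | S m => Cmul z (cp z m) end.
Definition N1 (z : Cplx) := Rabs (fst z) + Rabs (snd z).
Definition Cscal (k : R) (w : Cplx) : Cplx := (k * fst w, k * snd w).
Definition PS (cf : nat -> R) (z : Cplx) : Cplx :=
  (Series (fun n => cf n * fst (cp z n)), Series (fun n => cf n * snd (cp z n))).

Lemma N1_nonneg z : 0 <= N1 z.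
Proof. unfold N1. pose proof (Rabs_pos (fst z)). pose proof (Rabs_pos (snd z)). lra. Qed.

Lemma N1_mul z w : N1 (Cmul z w) <= N1 z * N1 w.
Proof.
  destruct z as [x y], w as [u v]. unfold N1, Cmul; simpl.
  pose proof (Rabs_triang (x*u) (- (y*v))). pose proof (Rabs_triang (x*v) (y*u)).
  rewrite Rabs_Ropp in H. rewrite !Rabs_mult in *.
  unfold Rminus. pose proof (Rabs_pos x). pose proof (Rabs_pos y). pose proof (Rabs_pos u). pose proof (Rabs_pos v).
  nra.
Qed.

Lemma N1_add z w : N1 (Cadd z w) <= N1 z + N1 w.
Proof.
  destruct z as [x y], w as [u v]. unfold N1, Cadd; simpl.
  pose proof (Rabs_triang x u). pose proof (Rabs_triang y v). lra.
Qed.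

Lemma N1_scal k w : N1 (Cscal k w) = Rabs k * N1 w.
Proof. unfold N1, Cscal; simpl. rewrite !Rabs_mult. ring. Qed.

Lemma N1_cp z n : N1 (cp z n) <= N1 z ^ n.
Proof.
  induction n.
  - unfold N1; simpl. rewrite Rabs_R1, Rabs_R0. lra.
  - simpl. eapply Rle_trans. apply N1_mul. apply Rmult_le_compat_l. apply N1_nonneg. auto.
Qed.

Lemma fst_N1 w : Rabs (fst w) <= N1 w.
Proof. unfold N1. pose proof (Rabs_pos (snd w)). lra. Qed.
Lemma snd_N1 w : Rabs (snd w) <= N1 w.
Proof. unfold N1. pose proof (Rabs_pos (fst w)). lra. Qed.

Lemma Cnorm_N1 z : Cnorm z <= N1 z.
Proof.
  destruct z as [x y]. unfold Cnorm, N1; simpl.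
  rewrite <- (sqrt_square (Rabs x + Rabs y)) by (pose proof (Rabs_pos x); pose proof (Rabs_pos y); lra).
  apply sqrt_le_1_alt.
  assert (Rabs x * Rabs x = x * x) by (rewrite <- Rabs_mult; apply Rabs_right; nra).
  assert (Rabs y * Rabs y = y * y) by (rewrite <- Rabs_mult; apply Rabs_right; nra).
  pose proof (Rabs_pos x); pose proof (Rabs_pos y).
  assert (0 <= Rabs x * Rabs y) by (apply Rmult_le_pos; auto). nra.
Qed.

Lemma N1_Cnorm z : N1 z <= 2 * Cnorm z.
Proof.
  destruct z as [x y]. unfold Cnorm, N1; simpl.
  assert (Rabs x * Rabs x = x * x) by (rewrite <- Rabs_mult; apply Rabs_right; nra).
  assert (Rabs y * Rabs y = y * y) by (rewrite <- Rabs_mult; apply Rabs_right; nra).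
  pose proof (Rabs_pos x); pose proof (Rabs_pos y).
  assert (Hs : sqrt (x*x+y*y) * sqrt (x*x+y*y) = x*x+y*y) by (apply sqrt_sqrt; nra).
  pose proof (sqrt_pos (x*x+y*y)). assert (Hu: (Rabs x + Rabs y)*(Rabs x + Rabs y) <= 2*(x*x+y*y)) by (pose proof (Rle_0_sqr (Rabs x - Rabs y)); unfold Rsqr in *; nra). nra.
Qed.

Lemma pow_sq_bound n : INR n ^ 2 <= 2 * 2 ^ n.
Proof.
  assert (aux : forall n, 2 * INR n + 1 <= 2 * 2 ^ n).
  { induction n0. simpl. lra. rewrite S_INR. simpl.
    assert (1 <= 2 ^ n0) by (apply pow_R1_Rle; lra). lra. }
  induction n. simpl. lra. rewrite S_INR. specialize (aux n). simpl in *. nra.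
Qed.

Lemma coef_bound (cf : nat -> R) K w n : 0 <= K -> Rabs (cf n) <= K ^ n / INR (fact n) ->
  Rabs (cf n * fst (cp w n)) <= (K * N1 w) ^ n / INR (fact n) /\
  Rabs (cf n * snd (cp w n)) <= (K * N1 w) ^ n / INR (fact n).
Proof.
  intros HK Hc. rewrite Rpow_mult_distr. rewrite !Rabs_mult.
  pose proof (N1_cp w n). pose proof (fst_N1 (cp w n)). pose proof (snd_N1 (cp w n)).
  pose proof (Rabs_pos (cf n)). pose proof (Rabs_pos (fst (cp w n))). pose proof (Rabs_pos (snd (cp w n))).
  assert (0 < / INR (fact n)) by (apply Rinv_0_lt_compat, INR_fact_lt_0).
  replace (K ^ n * N1 w ^ n / INR (fact n)) with (K ^ n / INR (fact n) * N1 w ^ n) by (unfold Rdiv; ring).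
  split; apply Rmult_le_compat; auto; lra.
Qed.

Lemma PS_ex1 (cf : nat -> R) K w : 0 <= K -> (forall n, Rabs (cf n) <= K ^ n / INR (fact n)) ->
  ex_series (fun n => cf n * fst (cp w n)) /\ ex_series (fun n => cf n * snd (cp w n)).
Proof.
  intros HK Hc. split; apply (exR_le _ (fun n => (K * N1 w) ^ n / INR (fact n))); try apply ex_exp;
  intros n; apply (coef_bound cf K w n HK (Hc n)).
Qed.

Lemma exp_mono x y : x <= y -> exp x <= exp y.
Proof. intros H. destruct (Req_dec x y). subst; lra. left. apply exp_increasing. lra. Qed.

Lemma PS_exptype (cf : nat -> R) K : 0 <= K -> (forall n, Rabs (cf n) <= K ^ n / INR (fact n)) ->
  exponential_type (PS cf).
Proof.
  intros HK Hc. exists 2, (2 * K). intros z.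
  eapply Rle_trans. apply Cnorm_N1. unfold N1, PS; simpl.
  assert (H1 : Rabs (Series (fun n => cf n * fst (cp z n))) <= exp (K * N1 z)).
  { rewrite <- Series_exp. apply SerR_le. intros n; apply (coef_bound cf K z n HK (Hc n)). apply ex_exp. }
  assert (H2 : Rabs (Series (fun n => cf n * snd (cp z n))) <= exp (K * N1 z)).
  { rewrite <- Series_exp. apply SerR_le. intros n; apply (coef_bound cf K z n HK (Hc n)). apply ex_exp. }
  assert (exp (K * N1 z) <= exp (2 * K * Cnorm z)).
  { apply exp_mono. pose proof (N1_Cnorm z). replace (2 * K * Cnorm z) with (K * (2 * Cnorm z)) by ring.
    apply Rmult_le_compat_l; auto. }
  lra.
Qed.

Definition Dn z h n := Csub (Csub (cp (Cadd z h) n) (cp z n)) (Cscal (INR n) (Cmul (cp z (pred n)) h)).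

Lemma Dn_rec z h n : Dn z h (S n) =
  Cadd (Cmul (Cadd z h) (Dn z h n)) (Cscal (INR n) (Cmul (cp z (pred n)) (Cmul h h))).
Proof.
  destruct n.
  - unfold Dn; simpl. destruct z, h; unfold Cadd, Csub, Cmul, Cscal, Defs.C1; simpl; f_equal; ring.
  - unfold Dn. cbn [cp pred]. rewrite !S_INR. destruct (cp (Cadd z h) n), (cp z n), z, h.
    unfold Cadd, Csub, Cmul, Cscal; cbn [fst snd]. f_equal; ring.
Qed.

Lemma Dn_bound z h n : N1 h <= 1 -> N1 (Dn z h n) <= INR n ^ 2 * (N1 z + 1) ^ n * N1 h ^ 2.
Proof.
  intros Hh. pose proof (N1_nonneg h) as Hh0. pose proof (N1_nonneg z) as Hz0.
  set (rho := N1 z + 1). assert (Hr : 1 <= rho) by (unfold rho; lra).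
  induction n.
  - assert (E : Dn z h 0 = (0, 0)).
    { unfold Dn; simpl. destruct z, h; unfold Cadd, Csub, Cmul, Cscal, Defs.C1; simpl; f_equal; ring. }
    rewrite E. unfold N1; simpl. rewrite Rabs_R0. nra.
  - rewrite Dn_rec. eapply Rle_trans. apply N1_add. rewrite N1_scal.
    assert (T1 : N1 (Cmul (Cadd z h) (Dn z h n)) <= rho * (INR n ^ 2 * rho ^ n * N1 h ^ 2)).
    { eapply Rle_trans. apply N1_mul. apply Rmult_le_compat; auto using N1_nonneg.
      pose proof (N1_add z h). unfold rho; lra. }
    assert (T2 : Rabs (INR n) * N1 (Cmul (cp z (pred n)) (Cmul h h)) <= INR n * (rho ^ S n * N1 h ^ 2)).
    { rewrite Rabs_right by (apply Rle_ge, pos_INR). apply Rmult_le_compat_l. apply pos_INR.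
      eapply Rle_trans. apply N1_mul. apply Rmult_le_compat; auto using N1_nonneg.
      eapply Rle_trans. apply N1_cp. apply Rle_trans with (rho ^ pred n).
      apply pow_incr. split. apply N1_nonneg. unfold rho; lra. apply Rle_pow; auto. lia.
      eapply Rle_trans. apply N1_mul. right; ring. }
    assert (0 <= rho ^ n) by (apply pow_le; lra).
    assert (0 <= N1 h ^ 2) by (apply pow_le; lra).
    pose proof (pos_INR n).
    rewrite S_INR. simpl pow in *.
    assert (0 <= rho * rho ^ n * (N1 h * (N1 h * 1))) by (apply Rmult_le_pos; [apply Rmult_le_pos|]; nra).
    nra.
Qed.

Lemma ser3 (A B c1 c2 E : nat -> R) x y : ex_series A -> ex_series B -> ex_series c1 -> ex_series c2 ->
  (forall n, E (S n) = c1 n * x + c2 n * y) -> E 0%nat = 0 ->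
  Series A - Series B - (Series c1 * x + Series c2 * y) = Series (fun n => A n - B n - E n).
Proof.
  intros HA HB H1 H2 HE HE0.
  assert (Hc1x : ex_series (fun n => c1 n * x)).
  { apply (exR_ext (fun n => x * c1 n)); [intros; ring | apply exR_scal; auto]. }
  assert (Hc2y : ex_series (fun n => c2 n * y)).
  { apply (exR_ext (fun n => y * c2 n)); [intros; ring | apply exR_scal; auto]. }
  assert (HS : ex_series (fun n => E (S n))).
  { apply (exR_ext (fun n => c1 n * x + c2 n * y)); [intros; symmetry; auto| apply exR_plus; auto]. }
  assert (HEx : ex_series E) by (apply (@ex_series_incr_1 R_AbsRing R_NormedModule E); auto).
  assert (Eq1 : Series c1 * x + Series c2 * y = Series E).
  { rewrite (Series_incr_1 E HEx), HE0. rewrite <- !Series_scal_r. rewrite <- Series_plus by auto.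
    rewrite Rplus_0_l. apply Series_ext. intros; symmetry; auto. }
  rewrite Eq1. rewrite <- Series_minus by auto. rewrite <- Series_minus. reflexivity.
  apply exR_minus; auto. auto.
Qed.

Lemma term_bound (cf : nat -> R) K z h n : 0 <= K -> Rabs (cf n) <= K ^ n / INR (fact n) -> N1 h <= 1 ->
  Rabs (cf n) * N1 (Dn z h n) <= (2 * K * (N1 z + 1)) ^ n / INR (fact n) * (2 * N1 h ^ 2).
Proof.
  intros HK Hc Hh. pose proof (Dn_bound z h n Hh). pose proof (pow_sq_bound n).
  pose proof (N1_nonneg z). pose proof (N1_nonneg h).
  assert (0 <= (N1 z + 1) ^ n) by (apply pow_le; lra).
  assert (0 <= N1 h ^ 2) by (apply pow_le; lra).
  assert (0 <= K ^ n / INR (fact n)).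
  { apply Rmult_le_pos. apply pow_le; auto. left; apply Rinv_0_lt_compat, INR_fact_lt_0. }
  apply Rle_trans with (K ^ n / INR (fact n) * (INR n ^ 2 * (N1 z + 1) ^ n * N1 h ^ 2)).
  apply Rmult_le_compat; auto using Rabs_pos, N1_nonneg.
  rewrite !Rpow_mult_distr. unfold Rdiv.
  replace (2 ^ n * K ^ n * (N1 z + 1) ^ n * / INR (fact n) * (2 * N1 h ^ 2)) with
    ((K ^ n * / INR (fact n)) * ((2 * 2 ^ n) * (N1 z + 1) ^ n * N1 h ^ 2)) by ring.
  apply Rmult_le_compat_l. exact H5.
  apply Rmult_le_compat_r; auto. apply Rmult_le_compat_r; auto.
Qed.

Lemma PS_entire (cf : nat -> R) K : 0 <= K -> (forall n, Rabs (cf n) <= K ^ n / INR (fact n)) ->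
  entire (PS cf).
Proof.
  intros HK Hc z.
  set (rho := N1 z + 1).
  set (d := fun n => INR (S n) * cf (S n)).
  exists (PS d z).
  assert (Hd : forall n w, Rabs (d n * fst (cp w n)) <= K * ((K * N1 w) ^ n / INR (fact n)) /\
                          Rabs (d n * snd (cp w n)) <= K * ((K * N1 w) ^ n / INR (fact n))).
  { intros n w. unfold d. rewrite !Rabs_mult. rewrite (Rabs_right (INR (S n))) by (apply Rle_ge, pos_INR).
    specialize (Hc (S n)).
    assert (E : INR (S n) * (K ^ S n / INR (fact (S n))) = K * (K ^ n / INR (fact n))).
    { rewrite fact_simpl, mult_INR. change (K ^ S n) with (K * K ^ n). field. split. apply INR_fact_neq_0. apply not_0_INR; lia. }
    assert (Hb : INR (S n) * Rabs (cf (S n)) <= K * (K ^ n / INR (fact n))).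
    { rewrite <- E. apply Rmult_le_compat_l. apply pos_INR. auto. }
    pose proof (N1_cp w n). pose proof (fst_N1 (cp w n)). pose proof (snd_N1 (cp w n)).
    assert (0 <= INR (S n) * Rabs (cf (S n))) by (apply Rmult_le_pos; [apply pos_INR|apply Rabs_pos]).
    rewrite Rpow_mult_distr.
    replace (K * (K ^ n * N1 w ^ n / INR (fact n))) with (K * (K ^ n / INR (fact n)) * N1 w ^ n) by (unfold Rdiv; ring).
    split; apply Rmult_le_compat; auto using Rabs_pos; lra. }
  assert (exd : forall w, ex_series (fun n => d n * fst (cp w n)) /\ ex_series (fun n => d n * snd (cp w n))).
  { intros w. split; apply (exR_le _ (fun n => K * ((K * N1 w) ^ n / INR (fact n))));
    try (apply exR_scal; apply ex_exp); intros n; apply Hd. }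
  set (C' := 2 * exp (2 * K * rho)).
  assert (Hser : forall h, N1 h <= 1 -> forall (pi : Cplx -> R), (forall w, Rabs (pi w) <= N1 w) ->
     Rabs (Series (fun n => cf n * pi (Dn z h n))) <= C' * N1 h ^ 2).
  { intros h Hh pi Hpi.
    replace (C' * N1 h ^ 2) with (Series (fun n => (2 * K * rho) ^ n / INR (fact n) * (2 * N1 h ^ 2))).
    apply SerR_le. intros n. rewrite Rabs_mult. eapply Rle_trans.
    apply Rmult_le_compat_l. apply Rabs_pos. apply Hpi. apply term_bound; auto.
    apply (exR_ext (fun n => (2 * N1 h ^ 2) * ((2 * K * rho) ^ n / INR (fact n)))). intros; ring.
    apply exR_scal, ex_exp.
    rewrite Series_scal_r, Series_exp. unfold C'. ring. }
  assert (Key : forall h, N1 h <= 1 ->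
     N1 (Csub (Csub (PS cf (Cadd z h)) (PS cf z)) (Cmul (PS d z) h)) <= 2 * C' * N1 h ^ 2).
  { intros h Hh.
    destruct (PS_ex1 cf K (Cadd z h) HK Hc) as [Ea1 Ea2].
    destruct (PS_ex1 cf K z HK Hc) as [Eb1 Eb2].
    destruct (exd z) as [Ec1 Ec2].
    assert (F1 : fst (Csub (Csub (PS cf (Cadd z h)) (PS cf z)) (Cmul (PS d z) h)) =
                 Series (fun n => cf n * fst (Dn z h n))).
    { unfold PS, Csub, Cmul; cbn [fst snd].
      replace (Series (fun n => d n * fst (cp z n)) * fst h - Series (fun n => d n * snd (cp z n)) * snd h)
        with (Series (fun n => d n * fst (cp z n)) * fst h + Series (fun n => d n * snd (cp z n)) * (- snd h)) by ring.
      rewrite (ser3 _ _ _ _ (fun n => INR n * cf n * fst (Cmul (cp z (pred n)) h))); auto.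
      - apply Series_ext. intros n. unfold Dn, Csub, Cscal; cbn [fst snd]. ring.
      - intros n. unfold d, Cmul; cbn [fst snd pred]. ring.
      - simpl. ring. }
    assert (F2 : snd (Csub (Csub (PS cf (Cadd z h)) (PS cf z)) (Cmul (PS d z) h)) =
                 Series (fun n => cf n * snd (Dn z h n))).
    { unfold PS, Csub, Cmul; cbn [fst snd].
      replace (Series (fun n => d n * fst (cp z n)) * snd h + Series (fun n => d n * snd (cp z n)) * fst h)
        with (Series (fun n => d n * fst (cp z n)) * snd h + Series (fun n => d n * snd (cp z n)) * fst h) by ring.
      rewrite (ser3 _ _ _ _ (fun n => INR n * cf n * snd (Cmul (cp z (pred n)) h))); auto.
      - apply Series_ext. intros n. unfold Dn, Csub, Cscal; cbn [fst snd]. ring.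
      - intros n. unfold d, Cmul; cbn [fst snd pred]. ring.
      - simpl. ring. }
    unfold N1 at 1. rewrite F1, F2.
    pose proof (Hser h Hh fst fst_N1). pose proof (Hser h Hh snd snd_N1). lra. }
  intros eps Heps.
  assert (HC' : 0 < C') by (unfold C'; pose proof (exp_pos (2 * K * rho)); lra).
  set (C2 := 8 * C').
  exists (Rmin (1/2) (eps / (C2 + 1))). split.
  { apply Rmin_glb_lt. lra. apply Rdiv_lt_0_compat; unfold C2; lra. }
  intros h Hh0 Hh.
  pose proof (Rmin_l (1/2) (eps / (C2 + 1))). pose proof (Rmin_r (1/2) (eps / (C2 + 1))).
  pose proof (N1_Cnorm h). pose proof (Cnorm_N1 h). pose proof (N1_nonneg h).
  assert (Hcn : 0 <= Cnorm h) by (unfold Cnorm; apply sqrt_pos).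
  assert (Hh1 : N1 h <= 1) by lra.
  specialize (Key h Hh1).
  eapply Rle_trans. apply Cnorm_N1. eapply Rle_trans. apply Key.
  assert (N1 h ^ 2 <= 4 * (Cnorm h * Cnorm h)) by (simpl; nra).
  assert (E3 : C2 * Cnorm h <= eps).
  { apply Rle_trans with (C2 * (eps / (C2 + 1))). apply Rmult_le_compat_l. unfold C2; lra. lra.
    unfold Rdiv. apply Rle_trans with (eps * (C2 * / (C2+1))). right; ring.
    assert (C2 * / (C2 + 1) <= 1).
    { apply (Rmult_le_reg_r (C2 + 1)). unfold C2; lra. rewrite Rmult_assoc, Rinv_l by (unfold C2; lra). lra. }
    nra. }
  apply Rle_trans with (C2 * Cnorm h * Cnorm h). unfold C2. nra.
  apply Rmult_le_compat_r; auto.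
Qed.

Lemma fst_Cnorm z : Rabs (fst z) <= Cnorm z.
Proof.
  destruct z as [x y]. unfold Cnorm; simpl. rewrite <- sqrt_Rsqr_abs. apply sqrt_le_1_alt.
  unfold Rsqr. nra.
Qed.
Lemma snd_Cnorm z : Rabs (snd z) <= Cnorm z.
Proof.
  destruct z as [x y]. unfold Cnorm; simpl. rewrite <- sqrt_Rsqr_abs. apply sqrt_le_1_alt.
  unfold Rsqr. nra.
Qed.


Section Main.
Variables (a b : option R) (p r : R -> R) (c M : R).
Hypothesis Hp : forall x, inI a b x -> 0 < p x.
Hypothesis Hr : forall x, inI a b x -> 0 < r x.
Hypothesis Hcp : forall x, inI a b x -> continuous p x.
Hypothesis Hcr : forall x, inI a b x -> continuous r x.
Hypothesis Hc : inI a b c.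
Hypothesis HM : forall t, inI a b t -> t <= c ->
  RInt (fun y => RInt (fun s => / p s) y c * r y) t c <= M.

Fixpoint U (n : nat) : R -> R :=
  match n with
  | O => fun _ => 1
  | S m => IA a b (fun s => IA a b (fun y => r y * U m y) s / p s)
  end.
Definition V n := IA a b (fun y => r y * U n y).

Definition r1 y : R := r y * U 0 y.
Definition Pc y : R := RInt (fun s => / p s) y c.

Lemma cont_invp : forall x, inI a b x -> continuous (fun s => / p s) x.
Proof. intros x Hx. apply cinv; auto. specialize (Hp x Hx). lra. Qed.

Lemma cont_r1 : forall x, inI a b x -> continuous r1 x.
Proof. intros x Hx. unfold r1. apply cmul; auto. apply cconst. Qed.

Lemma Pc_deriv x : inI a b x -> is_derive Pc x (- / p x).
Proof. intros Hx. apply (derive_RInt_I' a b (fun s => / p s)); auto. apply cont_invp. Qed.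

Lemma Pc_cont x : inI a b x -> continuous Pc x.
Proof. intros Hx. eapply dcont. apply Pc_deriv; auto. Qed.

Lemma Pc_mono y z : inI a b y -> inI a b z -> y <= z -> Pc z <= Pc y.
Proof.
  intros Hy Hz Hyz. unfold Pc. rewrite (Chasles_I a b _ y z c) by (auto; apply cont_invp).
  assert (0 <= RInt (fun s => / p s) y z).
  { apply (RInt_ge0_I a b); auto. apply cont_invp. intros w Hw _. left. apply Rinv_0_lt_compat; auto. }
  lra.
Qed.

Lemma Pc_nonneg y : inI a b y -> y <= c -> 0 <= Pc y.
Proof.
  intros Hy Hyc. unfold Pc. apply (RInt_ge0_I a b); auto. apply cont_invp.
  intros w Hw _. left. apply Rinv_0_lt_compat; auto.
Qed.

Lemma cont_Pr x : inI a b x -> continuous (fun y => Pc y * r y) x.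
Proof. intros Hx. apply cmul; auto. apply Pc_cont; auto. Qed.

Lemma r1_pos x : inI a b x -> 0 <= r1 x.
Proof. intros Hx. unfold r1; simpl. specialize (Hr x Hx). lra. Qed.

Lemma Good_r1 : Good a b r1.
Proof.
  destruct (inI_left a b c Hc) as [c' [Hc' Hc'c]].
  apply (Bdd_all a b r1 c'); auto. apply cont_r1. apply r1_pos.
  assert (HP : 0 < Pc c').
  { unfold Pc. apply RInt_gt_0; auto. intros w Hw. apply Rinv_0_lt_compat. apply Hp.
    apply (inI_conv a b c' c w); auto; lra.
    intros w Hw. apply cont_invp. apply (inI_conv a b c' c w); auto. }
  exists (M / Pc c'). intros t Ht Htc.
  apply (Rmult_le_reg_r (Pc c')); auto. unfold Rdiv. rewrite Rmult_assoc, Rinv_l by lra. rewrite Rmult_1_r.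
  rewrite Rmult_comm. rewrite <- (RInt_scalR r1) by (apply (ex_RInt_I a b); auto; apply cont_r1).
  apply Rle_trans with (RInt (fun y => Pc y * r y) t c').
  { apply (RInt_le_I a b); auto. intros; apply cmul. apply cconst. apply cont_r1; auto.
    apply cont_Pr. intros y Hy Hty. unfold r1; simpl. rewrite Rmult_1_r.
    apply Rmult_le_compat_r. left; auto. apply Pc_mono; auto. lra. }
  apply Rle_trans with (RInt (fun y => Pc y * r y) t c).
  { rewrite (Chasles_I a b _ t c' c) by (auto; apply cont_Pr).
    assert (0 <= RInt (fun y => Pc y * r y) c' c).
    { apply (RInt_ge0_I a b); auto. apply cont_Pr. lra. intros y Hy Hyy.
      apply Rmult_le_pos. apply Pc_nonneg; auto. lra. left; auto. }
    lra. }
  apply HM; auto. lra.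
Qed.

Definition Rf := V 0.

Lemma Rf_deriv x : inI a b x -> is_derive Rf x (r1 x).
Proof. intros Hx. apply IA_deriv; auto. apply Good_r1. Qed.
Lemma Rf_cont x : inI a b x -> continuous Rf x.
Proof. intros Hx. eapply dcont. apply Rf_deriv; auto. Qed.
Lemma Rf_nonneg x : inI a b x -> 0 <= Rf x.
Proof. intros Hx. apply IA_nonneg; auto. apply Good_r1. Qed.
Lemma Rf_diff x y : inI a b x -> inI a b y -> RInt r1 y x = Rf x - Rf y.
Proof. intros Hx Hy. unfold Rf, V. change (IA a b (fun y => r y * U 0 y)) with (IA a b r1). rewrite (IA_chasles2 a b r1 x y); auto. lra. apply Good_r1. Qed.
Lemma Rf_mono x y : inI a b x -> inI a b y -> y <= x -> Rf y <= Rf x.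
Proof.
  intros Hx Hy Hyx. assert (0 <= RInt r1 y x).
  { apply (RInt_ge0_I a b); auto. apply cont_r1. intros; apply r1_pos; auto. }
  rewrite Rf_diff in H; auto. lra.
Qed.

Lemma IBP t : inI a b t -> t <= c ->
  RInt (fun y => Pc y * r y) t c = RInt (fun s => RInt r1 t s / p s) t c.
Proof.
  intros Ht Htc.
  set (G := fun y => Pc y * RInt r1 t y).
  set (g := fun y => (- / p y) * RInt r1 t y + Pc y * r1 y).
  assert (HD : forall y, inI a b y -> is_derive G y (g y)).
  { intros y Hy. unfold G, g. apply dmul. apply Pc_deriv; auto. apply (derive_RInt_I a b); auto.
    apply cont_r1. }
  assert (HC : forall y, inI a b y -> continuous g y).
  { intros y Hy. unfold g. apply cplus; apply cmul.
    apply copp. apply cont_invp; auto. eapply dcont. apply (derive_RInt_I a b); auto. apply cont_r1.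
    apply Pc_cont; auto. apply cont_r1; auto. }
  pose proof (FTC_I a b G g t c HD HC Ht Hc) as E.
  assert (E0 : Pc c = 0) by (unfold Pc; rewrite RInt_point; reflexivity).
  assert (E1 : RInt r1 t t = 0) by (rewrite RInt_point; reflexivity).
  unfold G in E. rewrite E0, E1 in E.
  assert (E2 : RInt g t c = RInt (fun y => Pc y * r y) t c - RInt (fun s => RInt r1 t s / p s) t c).
  { rewrite <- RInt_minusR.
    apply RInt_ext. intros x Hx. unfold g, r1; simpl. unfold Rdiv. ring.
    apply (ex_RInt_I a b); auto. apply cont_Pr.
    apply (ex_RInt_I a b); auto. intros y Hy. apply cdiv. eapply dcont.
    apply (derive_RInt_I a b); auto. apply cont_r1. auto. specialize (Hp y Hy); lra. }
  rewrite E2 in E. lra.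
Qed.

Definition q0 s : R := Rf s / p s.

Lemma cont_q0 x : inI a b x -> continuous q0 x.
Proof. intros Hx. unfold q0. apply cdiv; auto. apply Rf_cont; auto. specialize (Hp x Hx); lra. Qed.
Lemma q0_nonneg x : inI a b x -> 0 <= q0 x.
Proof. intros Hx. unfold q0. apply Rmult_le_pos. apply Rf_nonneg; auto. left; apply Rinv_0_lt_compat; auto. Qed.

Lemma Rf_lim0 eps : 0 < eps -> exists t, inI a b t /\ forall x, inI a b x -> x < t -> Rf x < eps.
Proof.
  intros He. destruct (IA_lim0 a b r1 c Good_r1 Hc eps He) as [t [Ht H]]. exists t. split; auto.
Qed.

Lemma Bdd_q0 : Bdd a b q0 c.
Proof.
  exists M. intros t Ht Htc. apply Rnot_lt_le. intros Hlt.
  set (eps := RInt q0 t c - M).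
  assert (HK : 0 < Pc t + 1) by (pose proof (Pc_nonneg t Ht Htc); lra).
  destruct (Rf_lim0 (eps / (Pc t + 1))) as [t1 [Ht1 H1]].
  { unfold eps. apply Rdiv_lt_0_compat; lra. }
  assert (Hm : inI a b (Rmin t t1)) by (apply Rmin_case; auto).
  destruct (inI_left a b _ Hm) as [t' [Ht' Ht'm]].
  pose proof (Rmin_l t t1). pose proof (Rmin_r t t1).
  set (h := fun s => RInt r1 t' s / p s).
  assert (Hch : forall x, inI a b x -> continuous h x).
  { intros x Hx. unfold h. apply cdiv; auto. eapply dcont. apply (derive_RInt_I a b); auto.
    apply cont_r1. specialize (Hp x Hx); lra. }
  assert (E1 : RInt h t' c <= M).
  { unfold h. rewrite <- IBP; auto. apply HM; auto. lra. lra. }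
  assert (E2 : RInt h t c <= RInt h t' c).
  { rewrite (Chasles_I a b h t' t c); auto.
    assert (0 <= RInt h t' t); [|lra].
    apply (RInt_ge0_I a b); auto. lra. intros y Hy Hyy. unfold h. apply Rmult_le_pos.
    apply (RInt_ge0_I a b); auto. apply cont_r1. lra. intros; apply r1_pos; auto.
    left; apply Rinv_0_lt_compat; auto. }
  assert (E3 : RInt h t c = RInt q0 t c - Rf t' * Pc t).
  { unfold Pc. rewrite <- RInt_scalR, <- RInt_minusR.
    apply RInt_ext. intros x Hx. unfold h, q0. rewrite Rf_diff. unfold Rdiv. apply Rmult_minus_distr_r.
    apply (inI_conv2 a b t c); auto; lra. auto.
    apply (ex_RInt_I a b); auto. apply cont_q0.
    apply (ex_RInt_I a b); auto. intros; apply cmul. apply cconst. apply cont_invp; auto.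
    apply (ex_RInt_I a b); auto. apply cont_invp. }
  assert (E4 : Rf t' * Pc t < eps).
  { specialize (H1 t' Ht' ltac:(lra)). pose proof (Rf_nonneg t' Ht'). pose proof (Pc_nonneg t Ht Htc).
    apply Rle_lt_trans with (eps / (Pc t + 1) * (Pc t + 1) - eps / (Pc t + 1)).
    - assert (0 < eps / (Pc t + 1)) by (unfold eps; apply Rdiv_lt_0_compat; lra).
      assert (Rf t' * Pc t <= eps / (Pc t + 1) * Pc t) by (apply Rmult_le_compat_r; lra). lra.
    - assert (eps / (Pc t + 1) * (Pc t + 1) = eps) by (field; lra).
      assert (0 < eps / (Pc t + 1)) by (unfold eps; apply Rdiv_lt_0_compat; lra). lra. }
  unfold eps in E4. lra.
Qed.

Lemma Good_q0 : Good a b q0.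
Proof. apply (Bdd_all a b q0 c); auto. apply cont_q0. apply q0_nonneg. apply Bdd_q0. Qed.

Definition Q := U 1.
Lemma Q_eq : Q = IA a b q0.
Proof. reflexivity. Qed.
Lemma Q_deriv x : inI a b x -> is_derive Q x (q0 x).
Proof. intros Hx. rewrite Q_eq. apply IA_deriv; auto. apply Good_q0. Qed.
Lemma Q_cont x : inI a b x -> continuous Q x.
Proof. intros Hx. eapply dcont. apply Q_deriv; auto. Qed.
Lemma Q_nonneg x : inI a b x -> 0 <= Q x.
Proof. intros Hx. rewrite Q_eq. apply IA_nonneg; auto. apply Good_q0. Qed.
Lemma Q_mono x y : inI a b x -> inI a b y -> y <= x -> Q y <= Q x.
Proof.
  intros Hx Hy Hyx. rewrite Q_eq. rewrite (IA_chasles a b q0 x y); auto. 2: apply Good_q0.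
  assert (0 <= RInt q0 y x); [|lra].
  apply (RInt_ge0_I a b); auto. apply cont_q0. intros; apply q0_nonneg; auto.
Qed.
Lemma Q_lim0 eps : 0 < eps -> exists t, inI a b t /\ forall x, inI a b x -> x < t -> Q x < eps.
Proof.
  intros He. destruct (IA_lim0 a b q0 c Good_q0 Hc eps He) as [t [Ht H]]. exists t. split; auto.
Qed.

Definition Fq n x := Q x ^ n / INR (fact n).

Lemma Fq_nonneg n x : inI a b x -> 0 <= Fq n x.
Proof.
  intros Hx. unfold Fq. apply Rmult_le_pos. apply pow_le. apply Q_nonneg; auto.
  left; apply Rinv_0_lt_compat. apply INR_fact_lt_0.
Qed.

Lemma Fq_mono n x y : inI a b x -> inI a b y -> y <= x -> Fq n y <= Fq n x.
Proof.
  intros Hx Hy Hyx. unfold Fq. apply Rmult_le_compat_r.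
  left; apply Rinv_0_lt_compat. apply INR_fact_lt_0.
  apply pow_incr. split. apply Q_nonneg; auto. apply Q_mono; auto.
Qed.

Lemma Fq_deriv n x : inI a b x -> is_derive (Fq (S n)) x (q0 x * Fq n x).
Proof.
  intros Hx. unfold Fq.
  apply (dext (fun y => / INR (fact (S n)) * Q y ^ S n)). intros y; unfold Rdiv; ring.
  replace (q0 x * (Q x ^ n / INR (fact n))) with (/ INR (fact (S n)) * (INR (S n) * q0 x * Q x ^ pred (S n))).
  apply dscal. apply dpow. apply Q_deriv; auto.
  simpl pred. rewrite fact_simpl, mult_INR. field. split. apply INR_fact_neq_0. apply not_0_INR. lia.
Qed.

Lemma Fq_cont n x : inI a b x -> continuous (Fq n) x.
Proof.
  intros Hx. unfold Fq. apply cdiv. apply cpow. apply Q_cont; auto. apply cconst. apply INR_fact_neq_0.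
Qed.

Lemma V_step n : (forall x, inI a b x -> continuous (U n) x) ->
  (forall x, inI a b x -> 0 <= U n x <= Fq n x) ->
  Good a b (fun y => r y * U n y) /\ (forall x, inI a b x -> 0 <= V n x <= Rf x * Fq n x).
Proof.
  intros Hc1 Hb.
  assert (Hcont : forall x, inI a b x -> continuous (fun y => r y * U n y) x).
  { intros x Hx. apply cmul; auto. }
  assert (Hkey : forall x t, inI a b x -> inI a b t -> t <= x ->
     RInt (fun y => r y * U n y) t x <= Rf x * Fq n x).
  { intros x t Hx Ht Htx.
    apply Rle_trans with (RInt (fun y => Fq n x * r1 y) t x).
    - apply (RInt_le_I a b); auto. intros; apply cmul. apply cconst. apply cont_r1; auto.
      intros y Hy Hyy. unfold r1; simpl. rewrite Rmult_1_r. rewrite Rmult_comm.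
      apply Rmult_le_compat_r. left; auto. apply Rle_trans with (Fq n y). apply Hb; auto.
      apply Fq_mono; auto. lra.
    - rewrite RInt_scalR. rewrite Rf_diff; auto. pose proof (Fq_nonneg n x Hx).
      pose proof (Rf_nonneg t Ht). assert (Fq n x * Rf t >= 0) by (apply Rle_ge, Rmult_le_pos; lra). nra.
      apply (ex_RInt_I a b); auto. apply cont_r1. }
  assert (HG : Good a b (fun y => r y * U n y)).
  { split; [auto|split]. intros x Hx. apply Rmult_le_pos. left; auto. apply Hb; auto.
    intros x Hx. exists (Rf x * Fq n x). intros; apply Hkey; auto. }
  split; auto. intros x Hx. split. apply IA_nonneg; auto.
  apply IA_le; auto.
Qed.

Lemma U_step n : Good a b (fun y => r y * U n y) ->
  (forall x, inI a b x -> 0 <= V n x <= Rf x * Fq n x) ->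
  Good a b (fun s => V n s / p s) /\ (forall x, inI a b x -> continuous (U (S n)) x) /\
  (forall x, inI a b x -> 0 <= U (S n) x <= Fq (S n) x).
Proof.
  intros HG Hb.
  assert (HVd : forall x, inI a b x -> is_derive (V n) x (r x * U n x)).
  { intros x Hx. apply (IA_deriv a b (fun y => r y * U n y)); auto. }
  assert (Hcont : forall x, inI a b x -> continuous (fun s => V n s / p s) x).
  { intros x Hx. apply cdiv; auto. eapply dcont; apply HVd; auto. specialize (Hp x Hx); lra. }
  assert (Hkey : forall x t, inI a b x -> inI a b t -> t <= x ->
     RInt (fun s => V n s / p s) t x <= Fq (S n) x).
  { intros x t Hx Ht Htx.
    apply Rle_trans with (RInt (fun y => q0 y * Fq n y) t x).
    - apply (RInt_le_I a b); auto. intros; apply cmul. apply cont_q0; auto. apply Fq_cont; auto.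
      intros y Hy Hyy. unfold q0, Rdiv.
      replace (Rf y * / p y * Fq n y) with ((Rf y * Fq n y) * / p y) by ring.
      apply Rmult_le_compat_r. left; apply Rinv_0_lt_compat; auto.
      apply Hb; auto.
    - rewrite (FTC_I a b (Fq (S n)) (fun y => q0 y * Fq n y)); auto.
      pose proof (Fq_nonneg (S n) t Ht). lra.
      intros; apply Fq_deriv; auto. intros; apply cmul. apply cont_q0; auto. apply Fq_cont; auto. }
  assert (HG2 : Good a b (fun s => V n s / p s)).
  { split; [auto|split]. intros x Hx. unfold Rdiv. apply Rmult_le_pos. apply Hb; auto.
    left; apply Rinv_0_lt_compat; auto.
    intros x Hx. exists (Fq (S n) x). intros; apply Hkey; auto. }
  change (U (S n)) with (IA a b (fun s => V n s / p s)).
  split; auto. split.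
  - intros x Hx. eapply dcont. apply IA_deriv; auto.
  - intros x Hx. split. apply IA_nonneg; auto. apply IA_le; auto.
Qed.

Lemma U_bounds n : (forall x, inI a b x -> continuous (U n) x) /\
  (forall x, inI a b x -> 0 <= U n x <= Fq n x).
Proof.
  induction n.
  - split. intros; simpl; apply cconst. intros x Hx. simpl. unfold Fq. simpl. lra.
  - destruct IHn as [H1 H2]. destruct (V_step n H1 H2) as [H3 H4].
    destruct (U_step n H3 H4) as [_ [H5 H6]]. auto.
Qed.

Lemma Good_rU n : Good a b (fun y => r y * U n y).
Proof. destruct (U_bounds n) as [H1 H2]. apply (V_step n H1 H2). Qed.
Lemma V_bound n x : inI a b x -> 0 <= V n x <= Rf x * Fq n x.
Proof. destruct (U_bounds n) as [H1 H2]. apply (V_step n H1 H2). Qed.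
Lemma U_bound n x : inI a b x -> 0 <= U n x <= Fq n x.
Proof. destruct (U_bounds n) as [H1 H2]. auto. Qed.
Lemma V_deriv n x : inI a b x -> is_derive (V n) x (r x * U n x).
Proof. intros Hx. apply (IA_deriv a b (fun y => r y * U n y)); auto. apply Good_rU. Qed.
Lemma Good_Vp n : Good a b (fun s => V n s / p s).
Proof. apply (U_step n (Good_rU n)). intros; apply V_bound; auto. Qed.
Lemma U_deriv n x : inI a b x -> is_derive (U (S n)) x (V n x / p x).
Proof.
  intros Hx. change (U (S n)) with (IA a b (fun s => V n s / p s)). apply (IA_deriv a b (fun s => V n s / p s)); auto. apply Good_Vp.
Qed.

Definition Ud n y := match n with O => 0 | S m => V m y / p y end.
Lemma U_der n x : inI a b x -> is_derive (U n) x (Ud n x).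
Proof. intros Hx. destruct n. simpl. apply dconst. apply U_deriv; auto. Qed.
Lemma V_cont n x : inI a b x -> continuous (V n) x.
Proof. intros Hx. eapply dcont. apply V_deriv; auto. Qed.
Lemma Ud_cont n x : inI a b x -> continuous (Ud n) x.
Proof.
  intros Hx. destruct n. simpl. apply cconst. simpl. apply cdiv; auto. apply V_cont; auto.
  specialize (Hp x Hx); lra.
Qed.

Definition SU (e : nat -> R) x := Series (fun n => e n * U n x).
Definition SV (e : nat -> R) x := Series (fun n => e (S n) * V n x).

Section Coef.
Variables (e : nat -> R) (L : R).
Hypothesis HL : 0 <= L.
Hypothesis He : forall n, Rabs (e n) <= L ^ n.

Lemma termU n y : inI a b y -> Rabs (e n * U n y) <= (L * Q y) ^ n / INR (fact n).
Proof.
  intros Hy. rewrite Rabs_mult. destruct (U_bound n y Hy) as [H1 H2].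
  rewrite (Rabs_right (U n y)) by lra. rewrite Rpow_mult_distr.
  replace (L ^ n * Q y ^ n / INR (fact n)) with (L ^ n * Fq n y) by (unfold Fq, Rdiv; ring).
  apply Rmult_le_compat; auto using Rabs_pos.
Qed.

Lemma termV n y : inI a b y -> Rabs (e (S n) * V n y) <= L * Rf y * ((L * Q y) ^ n / INR (fact n)).
Proof.
  intros Hy. rewrite Rabs_mult. destruct (V_bound n y Hy) as [H1 H2].
  rewrite (Rabs_right (V n y)) by lra. rewrite Rpow_mult_distr.
  replace (L * Rf y * (L ^ n * Q y ^ n / INR (fact n))) with (L ^ S n * (Rf y * Fq n y)) by (unfold Fq, Rdiv; simpl; ring).
  apply Rmult_le_compat; auto using Rabs_pos.
Qed.

Lemma exSU y : inI a b y -> ex_series (fun n => e n * U n y).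
Proof. intros Hy. apply (exR_le _ (fun n => (L * Q y) ^ n / INR (fact n))). intros; apply termU; auto. apply ex_exp. Qed.

Lemma exSV y : inI a b y -> ex_series (fun n => e (S n) * V n y).
Proof.
  intros Hy. apply (exR_le _ (fun n => L * Rf y * ((L * Q y) ^ n / INR (fact n)))). intros; apply termV; auto.
  apply exR_scal, ex_exp.
Qed.

Lemma local_ball x : inI a b x -> exists d x1, 0 < d /\ inI a b x1 /\ x < x1 /\
  forall y, Rabs (y - x) < d -> inI a b y /\ y <= x1 /\ p x / 2 <= p y /\ r y <= r x + 1.
Proof.
  intros Hx. destruct (inI_open a b x Hx) as [d0 [Hd0 H0]].
  destruct (inI_right a b x Hx) as [x1 [Hx1 Hxx1]].
  pose proof (Hp x Hx).
  destruct (cont_nbhd p x (p x / 2) (Hcp x Hx)) as [d1 [Hd1 H1]]. lra.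
  destruct (cont_nbhd r x 1 (Hcr x Hx)) as [d2 [Hd2 H2]]. lra.
  exists (Rmin (Rmin d0 (x1 - x)) (Rmin d1 d2)), x1.
  pose proof (Rmin_l (Rmin d0 (x1 - x)) (Rmin d1 d2)). pose proof (Rmin_r (Rmin d0 (x1 - x)) (Rmin d1 d2)).
  pose proof (Rmin_l d0 (x1 - x)). pose proof (Rmin_r d0 (x1 - x)). pose proof (Rmin_l d1 d2). pose proof (Rmin_r d1 d2).
  split. repeat apply Rmin_glb_lt; lra. split; auto. split; auto.
  intros y Hy. split. apply H0; lra. split. apply Rabs_def2 in Hy. lra.
  specialize (H1 y ltac:(lra)). specialize (H2 y ltac:(lra)). apply Rabs_def2 in H1. apply Rabs_def2 in H2.
  split; lra.
Qed.

Lemma SU_deriv x : inI a b x -> derivable_pt_lim (SU e) x (SV e x / p x).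
Proof.
  intros Hx. destruct (local_ball x Hx) as [d [x1 [Hd [Hx1 [Hxx1 Hb]]]]].
  pose proof (Hp x Hx) as Hpx.
  set (Mb := fun n => L ^ n * Rf x1 * Fq (pred n) x1 * (2 / p x)).
  assert (HMb : ex_series Mb).
  { apply (@ex_series_incr_1 R_AbsRing R_NormedModule Mb).
    apply (exR_ext (fun n => (L * Rf x1 * (2 / p x)) * ((L * Q x1) ^ n / INR (fact n)))).
    intros n. unfold Mb, Fq. simpl pred. rewrite Rpow_mult_distr. simpl. unfold Rdiv. ring.
    apply exR_scal, ex_exp. }
  assert (Hg : forall n y, Rabs (y - x) < d -> Rabs (e n * Ud n y) <= Mb n).
  { intros n y Hy. destruct (Hb y Hy) as [Hy1 [Hy2 [Hy3 Hy4]]]. unfold Mb.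
    pose proof (Rf_nonneg x1 Hx1). pose proof (Fq_nonneg (pred n) x1 Hx1).
    assert (0 <= L ^ n) by (apply pow_le; auto).
    assert (0 < 2 / p x) by (apply Rdiv_lt_0_compat; lra).
    destruct n.
    - simpl Ud. rewrite Rmult_0_r, Rabs_R0. apply Rmult_le_pos; [apply Rmult_le_pos; [apply Rmult_le_pos|]|]; lra.
    - simpl Ud. simpl pred. rewrite Rabs_mult.
      replace (L ^ S n * Rf x1 * Fq n x1 * (2 / p x)) with (L ^ S n * (Rf x1 * Fq n x1 * (2 / p x))) by ring.
      apply Rmult_le_compat; auto using Rabs_pos.
      destruct (V_bound n y Hy1) as [V1 V2].
      assert (Hpy : 0 < p y) by (apply Hp; auto).
      unfold Rdiv. rewrite Rabs_mult. rewrite Rabs_right by lra. rewrite Rabs_right by (apply Rle_ge; left; apply Rinv_0_lt_compat; auto).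
      apply Rmult_le_compat; auto. left; apply Rinv_0_lt_compat; auto.
      apply Rle_trans with (Rf y * Fq n y). auto. apply Rmult_le_compat. apply Rf_nonneg; auto. apply Fq_nonneg; auto.
      apply Rf_mono; auto. apply Fq_mono; auto.
      replace (2 * / p x) with (/ (p x / 2)) by (field; lra). apply Rinv_le_contravar; lra. }
  assert (HD := TD (fun n y => e n * U n y) (fun n y => e n * Ud n y) x d Mb Hd).
  assert (E : Series (fun n => e n * Ud n x) = SV e x / p x).
  { rewrite Series_incr_1. simpl Ud. rewrite Rmult_0_r, Rplus_0_l. unfold SV.
    unfold Rdiv. rewrite <- Series_scal_r. apply Series_ext. intros n. unfold Rdiv. ring.
    apply (exR_le _ Mb); auto. intros n. apply Hg. rewrite Rminus_diag, Rabs_R0. auto. }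
  rewrite <- E. apply HD; auto.
  - intros n y Hy. apply is_derive_Reals. apply dscal. apply U_der. apply Hb; auto.
  - intros n y Hy. apply cmul. apply cconst. apply Ud_cont. apply Hb; auto.
  - intros y Hy. apply exSU. apply Hb; auto.
Qed.

Lemma SV_deriv x : inI a b x -> derivable_pt_lim (SV e) x (r x * Series (fun n => e (S n) * U n x)).
Proof.
  intros Hx. destruct (local_ball x Hx) as [d [x1 [Hd [Hx1 [Hxx1 Hb]]]]].
  pose proof (Hr x Hx) as Hrx.
  set (Mb := fun n => L ^ S n * (r x + 1) * Fq n x1).
  assert (HMb : ex_series Mb).
  { apply (exR_ext (fun n => (L * (r x + 1)) * ((L * Q x1) ^ n / INR (fact n)))).
    intros n. unfold Mb, Fq. rewrite Rpow_mult_distr. simpl. unfold Rdiv. ring.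
    apply exR_scal, ex_exp. }
  assert (Hg : forall n y, Rabs (y - x) < d -> Rabs (e (S n) * (r y * U n y)) <= Mb n).
  { intros n y Hy. destruct (Hb y Hy) as [Hy1 [Hy2 [Hy3 Hy4]]]. unfold Mb.
    destruct (U_bound n y Hy1) as [U1 U2]. pose proof (Hr y Hy1).
    rewrite Rmult_assoc. rewrite Rabs_mult. apply Rmult_le_compat; auto using Rabs_pos.
    rewrite Rabs_right by (apply Rle_ge, Rmult_le_pos; lra).
    apply Rmult_le_compat; try lra. apply Rle_trans with (Fq n y); auto. apply Fq_mono; auto. }
  assert (HD := TD (fun n y => e (S n) * V n y) (fun n y => e (S n) * (r y * U n y)) x d Mb Hd).
  assert (E : Series (fun n => e (S n) * (r x * U n x)) = r x * Series (fun n => e (S n) * U n x)).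
  { rewrite <- Series_scal_l. apply Series_ext. intros n. ring. }
  rewrite <- E. apply HD; auto.
  - intros n y Hy. apply is_derive_Reals. apply dscal. apply V_deriv. apply Hb; auto.
  - intros n y Hy. apply cmul. apply cconst. apply cmul. apply Hcr, Hb; auto. apply U_bounds, Hb; auto.
  - intros y Hy. apply exSV. apply Hb; auto.
Qed.

Lemma SU_lim eps : 0 < eps -> exists t, inI a b t /\
  forall y, inI a b y -> y < t -> Rabs (SU e y - e 0%nat) < eps.
Proof.
  intros Heps. set (K := L * exp (L * Q c) + 1).
  assert (HK : 0 < K) by (unfold K; pose proof (exp_pos (L * Q c)); nra).
  destruct (Q_lim0 (eps / K)) as [t [Ht H]]. apply Rdiv_lt_0_compat; lra.
  assert (Hm : inI a b (Rmin t c)) by (apply Rmin_case; auto).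
  exists (Rmin t c). split; auto. intros y Hy Hyt.
  pose proof (Rmin_l t c). pose proof (Rmin_r t c).
  specialize (H y Hy ltac:(lra)).
  pose proof (Q_nonneg y Hy) as HQ. pose proof (Q_mono c y Hc Hy ltac:(lra)) as HQc.
  unfold SU. rewrite Series_incr_1 by (apply exSU; auto). simpl U at 1.
  replace (e 0%nat * 1 + Series (fun k => e (S k) * U (S k) y) - e 0%nat) with
    (Series (fun k => e (S k) * U (S k) y)) by ring.
  eapply Rle_lt_trans. apply (SerR_le _ (fun n => (L * Q y) * ((L * Q y) ^ n / INR (fact n)))).
  - intros n. eapply Rle_trans. apply termU; auto. rewrite fact_simpl, mult_INR. simpl pow.
    assert (0 <= L * Q y) by nra. assert (0 <= (L * Q y) ^ n) by (apply pow_le; auto).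
    assert (0 < INR (fact n)) by apply INR_fact_lt_0.
    assert (1 <= INR (S n)) by (rewrite S_INR; pose proof (pos_INR n); lra).
    unfold Rdiv. rewrite Rinv_mult. rewrite Rmult_assoc.
    apply Rmult_le_compat_l; auto. rewrite (Rmult_comm (/ INR (S n))), <- Rmult_assoc.
    rewrite <- (Rmult_1_r ((L * Q y) ^ n * / INR (fact n))) at 2. apply Rmult_le_compat_l.
    apply Rmult_le_pos; auto. left; apply Rinv_0_lt_compat; auto.
    replace 1 with (/ 1) by field. apply Rinv_le_contravar; lra.
  - apply exR_scal, ex_exp.
  - rewrite Series_scal_l, Series_exp.
    assert (exp (L * Q y) <= exp (L * Q c)) by (apply exp_mono; apply Rmult_le_compat_l; auto).
    assert (L * Q y * exp (L * Q y) <= Q y * K).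
    { unfold K. pose proof (exp_pos (L * Q y)). assert (0 <= L * Q y) by nra. nra. }
    assert (Q y * K < eps / K * K) by (apply Rmult_lt_compat_r; auto).
    replace (eps / K * K) with eps in * by (field; lra). lra.
Qed.

Lemma SV_lim eps : 0 < eps -> exists t, inI a b t /\
  forall y, inI a b y -> y < t -> Rabs (SV e y) < eps.
Proof.
  intros Heps. set (K := L * exp (L * Q c) + 1).
  assert (HK : 0 < K) by (unfold K; pose proof (exp_pos (L * Q c)); nra).
  destruct (Rf_lim0 (eps / K)) as [t [Ht H]]. apply Rdiv_lt_0_compat; lra.
  assert (Hm : inI a b (Rmin t c)) by (apply Rmin_case; auto).
  exists (Rmin t c). split; auto. intros y Hy Hyt.
  pose proof (Rmin_l t c). pose proof (Rmin_r t c).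
  specialize (H y Hy ltac:(lra)).
  pose proof (Q_nonneg y Hy) as HQ. pose proof (Q_mono c y Hc Hy ltac:(lra)) as HQc.
  pose proof (Rf_nonneg y Hy) as HR.
  unfold SV. eapply Rle_lt_trans. apply (SerR_le _ (fun n => L * Rf y * ((L * Q y) ^ n / INR (fact n)))).
  - intros n. apply termV; auto.
  - apply exR_scal, ex_exp.
  - rewrite Series_scal_l, Series_exp.
    assert (exp (L * Q y) <= exp (L * Q c)) by (apply exp_mono; apply Rmult_le_compat_l; auto).
    assert (L * Rf y * exp (L * Q y) <= Rf y * K).
    { unfold K. pose proof (exp_pos (L * Q y)). assert (0 <= L * Rf y) by nra. nra. }
    assert (Rf y * K < eps / K * K) by (apply Rmult_lt_compat_r; auto).
    replace (eps / K * K) with eps in * by (field; lra). lra.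
Qed.

End Coef.

Definition ere (lam : Cplx) n := (-1) ^ n * fst (cp lam n).
Definition eim (lam : Cplx) n := (-1) ^ n * snd (cp lam n).
Definition Wsol (lam : Cplx) x := PS (fun n => (-1) ^ n * U n x) lam.
Definition dWsol (lam : Cplx) x : Cplx := (SV (ere lam) x / p x, SV (eim lam) x / p x).

Lemma ere_bound lam n : Rabs (ere lam n) <= N1 lam ^ n.
Proof.
  unfold ere. rewrite Rabs_mult, pow_1_abs, Rmult_1_l. eapply Rle_trans. apply fst_N1. apply N1_cp.
Qed.
Lemma eim_bound lam n : Rabs (eim lam n) <= N1 lam ^ n.
Proof.
  unfold eim. rewrite Rabs_mult, pow_1_abs, Rmult_1_l. eapply Rle_trans. apply snd_N1. apply N1_cp.
Qed.

Lemma W_fst lam x : fst (Wsol lam x) = SU (ere lam) x.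
Proof. unfold Wsol, PS, SU, ere; simpl. apply Series_ext. intros; ring. Qed.
Lemma W_snd lam x : snd (Wsol lam x) = SU (eim lam) x.
Proof. unfold Wsol, PS, SU, eim; simpl. apply Series_ext. intros; ring. Qed.

Lemma ere_S lam n : ere lam (S n) = - (fst lam * ere lam n - snd lam * eim lam n).
Proof. unfold ere, eim. cbn [cp pow]. unfold Cmul; cbn [fst snd]. ring. Qed.
Lemma eim_S lam n : eim lam (S n) = - (fst lam * eim lam n + snd lam * ere lam n).
Proof. unfold ere, eim. cbn [cp pow]. unfold Cmul; cbn [fst snd]. ring. Qed.

Lemma Wsol_solves lam : solves a b p r lam (Wsol lam) (dWsol lam).
Proof.
  pose proof (N1_nonneg lam) as HL.
  intros x Hx. unfold dWsol; cbn [fst snd].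
  assert (exre := exSU (ere lam) (N1 lam) (ere_bound lam) x Hx).
  assert (exim := exSU (eim lam) (N1 lam) (eim_bound lam) x Hx).
  split; [|split; [|split]].
  - apply is_derive_Reals. apply (dext (SU (ere lam))). intros; symmetry; apply W_fst.
    apply is_derive_Reals. apply SU_deriv with (L := N1 lam); auto. apply ere_bound.
  - apply is_derive_Reals. apply (dext (SU (eim lam))). intros; symmetry; apply W_snd.
    apply is_derive_Reals. apply SU_deriv with (L := N1 lam); auto. apply eim_bound.
  - apply is_derive_Reals. apply (dext_I a b (SV (ere lam))); auto.
    intros y Hy. field. specialize (Hp y Hy); lra.
    replace (- (r x * fst (Cmul lam (Wsol lam x)))) with (r x * Series (fun n => ere lam (S n) * U n x)).
    apply is_derive_Reals. apply SV_deriv with (L := N1 lam); auto. apply ere_bound.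
    unfold Cmul; cbn [fst snd]. rewrite W_fst, W_snd. unfold SU.
    rewrite (Series_ext _ (fun n => (- fst lam) * (ere lam n * U n x) + snd lam * (eim lam n * U n x))).
    rewrite Series_plus, !Series_scal_l. ring.
    apply (exR_scal (fun n => ere lam n * U n x)); auto. apply (exR_scal (fun n => eim lam n * U n x)); auto.
    intros n. rewrite ere_S. ring.
  - apply is_derive_Reals. apply (dext_I a b (SV (eim lam))); auto.
    intros y Hy. field. specialize (Hp y Hy); lra.
    replace (- (r x * snd (Cmul lam (Wsol lam x)))) with (r x * Series (fun n => eim lam (S n) * U n x)).
    apply is_derive_Reals. apply SV_deriv with (L := N1 lam); auto. apply eim_bound.
    unfold Cmul; cbn [fst snd]. rewrite W_fst, W_snd. unfold SU.
    rewrite (Series_ext _ (fun n => (- fst lam) * (eim lam n * U n x) + (- snd lam) * (ere lam n * U n x))).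
    rewrite Series_plus, !Series_scal_l. ring.
    apply (exR_scal (fun n => eim lam n * U n x)); auto. apply (exR_scal (fun n => ere lam n * U n x)); auto.
    intros n. rewrite eim_S. ring.
Qed.

Lemma Wsol_lim1 lam : lim_at_left_end a b (Wsol lam) Defs.C1.
Proof.
  pose proof (N1_nonneg lam) as HL.
  intros eps Heps.
  destruct (SU_lim (ere lam) (N1 lam) HL (ere_bound lam) (eps / 2)) as [t1 [Ht1 H1]]. lra.
  destruct (SU_lim (eim lam) (N1 lam) HL (eim_bound lam) (eps / 2)) as [t2 [Ht2 H2]]. lra.
  exists (Rmin t1 t2). split. apply Rmin_case; auto. intros x Hx Hxt.
  pose proof (Rmin_l t1 t2). pose proof (Rmin_r t1 t2).
  specialize (H1 x Hx ltac:(lra)). specialize (H2 x Hx ltac:(lra)).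
  eapply Rle_lt_trans. apply Cnorm_N1. unfold N1, Csub, Defs.C1; cbn [fst snd].
  rewrite W_fst, W_snd. unfold ere, eim in H1, H2. simpl in H1, H2.
  replace (1 * 1) with 1 in H1 by ring. replace (1 * 0) with 0 in H2 by ring.
  unfold ere, eim. lra.
Qed.

Lemma Wsol_lim0 lam : lim_at_left_end a b
  (fun x => (p x * fst (dWsol lam x), p x * snd (dWsol lam x))) Defs.C0.
Proof.
  pose proof (N1_nonneg lam) as HL.
  intros eps Heps.
  destruct (SV_lim (ere lam) (N1 lam) HL (ere_bound lam) (eps / 2)) as [t1 [Ht1 H1]]. lra.
  destruct (SV_lim (eim lam) (N1 lam) HL (eim_bound lam) (eps / 2)) as [t2 [Ht2 H2]]. lra.
  exists (Rmin t1 t2). split. apply Rmin_case; auto. intros x Hx Hxt.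
  pose proof (Rmin_l t1 t2). pose proof (Rmin_r t1 t2).
  specialize (H1 x Hx ltac:(lra)). specialize (H2 x Hx ltac:(lra)).
  eapply Rle_lt_trans. apply Cnorm_N1. unfold N1, Csub, Defs.C0, dWsol; cbn [fst snd].
  assert (p x <> 0) by (specialize (Hp x Hx); lra).
  replace (p x * (SV (ere lam) x / p x) - 0) with (SV (ere lam) x) by (field; auto).
  replace (p x * (SV (eim lam) x / p x) - 0) with (SV (eim lam) x) by (field; auto).
  lra.
Qed.

Lemma Wsol_entire x : inI a b x -> entire (fun lam => Wsol lam x) /\ exponential_type (fun lam => Wsol lam x).
Proof.
  intros Hx.
  assert (Hc1 : forall n, Rabs ((-1) ^ n * U n x) <= Q x ^ n / INR (fact n)).
  { intros n. rewrite Rabs_mult, pow_1_abs, Rmult_1_l. destruct (U_bound n x Hx).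
    rewrite Rabs_right by lra. exact H0. }
  split.
  - apply (PS_entire _ (Q x)); auto. apply Q_nonneg; auto.
  - apply (PS_exptype _ (Q x)); auto. apply Q_nonneg; auto.
Qed.

Lemma lim_le (A B : R) (g : R -> R) s : inI a b s ->
  (forall t, inI a b t -> t <= s -> A <= B + g t) ->
  (forall eps, 0 < eps -> exists t0, inI a b t0 /\ forall t, inI a b t -> t < t0 -> g t < eps) ->
  A <= B.
Proof.
  intros Hs H Hg. apply Rnot_lt_le. intros Hlt.
  destruct (Hg (A - B)) as [t0 [Ht0 H0]]. lra.
  assert (Hm : inI a b (Rmin t0 s)) by (apply Rmin_case; auto).
  destruct (inI_left a b _ Hm) as [t [Ht Htm]].
  pose proof (Rmin_l t0 s). pose proof (Rmin_r t0 s).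
  specialize (H t Ht ltac:(lra)). specialize (H0 t Ht ltac:(lra)). lra.
Qed.

Lemma abs_RInt_I (f : R -> R) t s : (forall x, inI a b x -> continuous f x) ->
  inI a b t -> inI a b s -> t <= s -> Rabs (RInt f t s) <= RInt (fun y => Rabs (f y)) t s.
Proof. intros Hf Ht Hs Hts. apply abs_RInt_le; auto. apply (ex_RInt_I a b); auto. Qed.

Lemma uniq lam w dw : solves a b p r lam w dw -> lim_at_left_end a b w Defs.C1 ->
  lim_at_left_end a b (fun x => (p x * fst (dw x), p x * snd (dw x))) Defs.C0 ->
  forall x, inI a b x -> w x = Wsol lam x.
Proof.
  intros Hs Hl1 Hl0 x0 Hx0.
  pose proof (Wsol_solves lam) as Hs'. pose proof (Wsol_lim1 lam) as Hl1'. pose proof (Wsol_lim0 lam) as Hl0'.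
  set (W := Wsol lam) in *. set (dW := dWsol lam) in *.
  set (l1 := fst lam). set (l2 := snd lam). set (Lam := N1 lam).
  set (v1 := fun t => fst (w t) - fst (W t)).
  set (v2 := fun t => snd (w t) - snd (W t)).
  set (d1 := fun t => fst (dw t) - fst (dW t)).
  set (d2 := fun t => snd (dw t) - snd (dW t)).
  set (P1 := fun t => p t * d1 t). set (P2 := fun t => p t * d2 t).
  assert (Dv1 : forall y, inI a b y -> is_derive v1 y (d1 y)).
  { intros y Hy. apply is_derive_Reals. destruct (Hs y Hy) as [A1 _]. destruct (Hs' y Hy) as [B1 _].
    exact (derivable_pt_lim_minus _ _ y _ _ A1 B1). }
  assert (Dv2 : forall y, inI a b y -> is_derive v2 y (d2 y)).
  { intros y Hy. apply is_derive_Reals. destruct (Hs y Hy) as [_ [A1 _]]. destruct (Hs' y Hy) as [_ [B1 _]].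
    exact (derivable_pt_lim_minus _ _ y _ _ A1 B1). }
  assert (DP1 : forall y, inI a b y -> is_derive P1 y (- (r y * (l1 * v1 y - l2 * v2 y)))).
  { intros y Hy. apply is_derive_Reals. destruct (Hs y Hy) as [_ [_ [A1 _]]]. destruct (Hs' y Hy) as [_ [_ [B1 _]]].
    pose proof (derivable_pt_lim_minus _ _ y _ _ A1 B1) as HH.
    apply is_derive_Reals in HH. apply is_derive_Reals.
    eapply (dext (fun t => p t * fst (dw t) - p t * fst (dW t))). intros t. unfold P1, d1. ring.
    replace (- (r y * (l1 * v1 y - l2 * v2 y))) with
      (- (r y * fst (Cmul lam (w y))) - - (r y * fst (Cmul lam (W y)))). exact HH.
    unfold Cmul, v1, v2, l1, l2; cbn [fst snd]. ring. }
  assert (DP2 : forall y, inI a b y -> is_derive P2 y (- (r y * (l1 * v2 y + l2 * v1 y)))).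
  { intros y Hy. apply is_derive_Reals. destruct (Hs y Hy) as [_ [_ [_ A1]]]. destruct (Hs' y Hy) as [_ [_ [_ B1]]].
    pose proof (derivable_pt_lim_minus _ _ y _ _ A1 B1) as HH.
    apply is_derive_Reals in HH. apply is_derive_Reals.
    eapply (dext (fun t => p t * snd (dw t) - p t * snd (dW t))). intros t. unfold P2, d2. ring.
    replace (- (r y * (l1 * v2 y + l2 * v1 y))) with
      (- (r y * snd (Cmul lam (w y))) - - (r y * snd (Cmul lam (W y)))). exact HH.
    unfold Cmul, v1, v2, l1, l2; cbn [fst snd]. ring. }
  assert (Cv1 : forall y, inI a b y -> continuous v1 y) by (intros; eapply dcont; apply Dv1; auto).
  assert (Cv2 : forall y, inI a b y -> continuous v2 y) by (intros; eapply dcont; apply Dv2; auto).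
  assert (CP1 : forall y, inI a b y -> continuous P1 y) by (intros; eapply dcont; apply DP1; auto).
  assert (CP2 : forall y, inI a b y -> continuous P2 y) by (intros; eapply dcont; apply DP2; auto).
  assert (Ed1 : forall y, inI a b y -> d1 y = P1 y / p y).
  { intros y Hy. unfold P1. field. specialize (Hp y Hy). lra. }
  assert (Ed2 : forall y, inI a b y -> d2 y = P2 y / p y).
  { intros y Hy. unfold P2. field. specialize (Hp y Hy). lra. }
  assert (Cd1 : forall y, inI a b y -> continuous d1 y).
  { intros y Hy. apply (continuous_ext_loc d1 (fun t => P1 t / p t) y).
    generalize (inI_locally a b y Hy). apply filter_imp. intros; symmetry; auto.
    apply cdiv; auto. specialize (Hp y Hy); lra. }
  assert (Cd2 : forall y, inI a b y -> continuous d2 y).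
  { intros y Hy. apply (continuous_ext_loc d2 (fun t => P2 t / p t) y).
    generalize (inI_locally a b y Hy). apply filter_imp. intros; symmetry; auto.
    apply cdiv; auto. specialize (Hp y Hy); lra. }
  set (Nv := fun y => Rabs (v1 y) + Rabs (v2 y)).
  set (NP := fun y => Rabs (P1 y) + Rabs (P2 y)).
  assert (LNv : forall eps, 0 < eps -> exists t0, inI a b t0 /\ forall t, inI a b t -> t < t0 -> Nv t < eps).
  { intros eps He. destruct (Hl1 (eps/4)) as [t1 [Ht1 H1]]. lra. destruct (Hl1' (eps/4)) as [t2 [Ht2 H2]]. lra.
    exists (Rmin t1 t2). split. apply Rmin_case; auto. intros t Ht Htt.
    pose proof (Rmin_l t1 t2). pose proof (Rmin_r t1 t2).
    specialize (H1 t Ht ltac:(lra)). specialize (H2 t Ht ltac:(lra)).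
    pose proof (fst_Cnorm (Csub (w t) Defs.C1)). pose proof (snd_Cnorm (Csub (w t) Defs.C1)).
    pose proof (fst_Cnorm (Csub (W t) Defs.C1)). pose proof (snd_Cnorm (Csub (W t) Defs.C1)).
    unfold Csub, Defs.C1 in *; cbn [fst snd] in *. unfold Nv, v1, v2.
    pose proof (Rabs_triang (fst (w t) - 1) (- (fst (W t) - 1))).
    pose proof (Rabs_triang (snd (w t) - 0) (- (snd (W t) - 0))).
    rewrite Rabs_Ropp in *.
    replace (fst (w t) - 1 + - (fst (W t) - 1)) with (fst (w t) - fst (W t)) in * by ring.
    replace (snd (w t) - 0 + - (snd (W t) - 0)) with (snd (w t) - snd (W t)) in * by ring.
    lra. }
  assert (LNP : forall eps, 0 < eps -> exists t0, inI a b t0 /\ forall t, inI a b t -> t < t0 -> NP t < eps).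
  { intros eps He. destruct (Hl0 (eps/4)) as [t1 [Ht1 H1]]. lra. destruct (Hl0' (eps/4)) as [t2 [Ht2 H2]]. lra.
    exists (Rmin t1 t2). split. apply Rmin_case; auto. intros t Ht Htt.
    pose proof (Rmin_l t1 t2). pose proof (Rmin_r t1 t2).
    specialize (H1 t Ht ltac:(lra)). specialize (H2 t Ht ltac:(lra)).
    set (A := (p t * fst (dw t), p t * snd (dw t))) in *.
    set (B := (p t * fst (dW t), p t * snd (dW t))) in *.
    pose proof (fst_Cnorm (Csub A Defs.C0)). pose proof (snd_Cnorm (Csub A Defs.C0)).
    pose proof (fst_Cnorm (Csub B Defs.C0)). pose proof (snd_Cnorm (Csub B Defs.C0)).
    unfold A, B, Csub, Defs.C0 in *; cbn [fst snd] in *. unfold NP, P1, P2, d1, d2.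
    pose proof (Rabs_triang (p t * fst (dw t) - 0) (- (p t * fst (dW t) - 0))).
    pose proof (Rabs_triang (p t * snd (dw t) - 0) (- (p t * snd (dW t) - 0))).
    rewrite Rabs_Ropp in *.
    replace (p t * fst (dw t) - 0 + - (p t * fst (dW t) - 0)) with (p t * (fst (dw t) - fst (dW t))) in * by ring.
    replace (p t * snd (dw t) - 0 + - (p t * snd (dW t) - 0)) with (p t * (snd (dw t) - snd (dW t))) in * by ring.
    lra. }
  assert (HVb : exists Vb, 0 <= Vb /\ forall s, inI a b s -> s <= x0 -> Nv s <= Vb).
  { destruct (LNv 1) as [t0 [Ht0 H0]]. lra.
    assert (Hm : inI a b (Rmin t0 x0)) by (apply Rmin_case; auto).
    destruct (inI_left a b _ Hm) as [t' [Ht' Htm]].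
    pose proof (Rmin_l t0 x0). pose proof (Rmin_r t0 x0).
    destruct (continuity_ab_maj Nv t' x0) as [Mx [HMx1 HMx2]]. lra.
    { intros z Hz. apply (proj2 (continuity_pt_filterlim Nv z)). change (continuous Nv z). unfold Nv. apply cplus; apply cabs.
      apply Cv1. apply (inI_conv a b t' x0); auto. apply Cv2. apply (inI_conv a b t' x0); auto. }
    exists (Rmax 1 (Nv Mx)). split. pose proof (Rmax_l 1 (Nv Mx)); lra.
    intros s Hs0 Hsx. pose proof (Rmax_l 1 (Nv Mx)). pose proof (Rmax_r 1 (Nv Mx)).
    destruct (Rlt_le_dec s t').
    - specialize (H0 s Hs0 ltac:(lra)). lra.
    - specialize (HMx1 s ltac:(lra)). lra. }
  destruct HVb as [Vb [HVb0 HVb]].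
  assert (HLam : 0 <= Lam) by apply N1_nonneg.
  assert (Hlam : forall u1 u2, Rabs (l1 * u1 - l2 * u2) + Rabs (l1 * u2 + l2 * u1) <= Lam * (Rabs u1 + Rabs u2)).
  { intros u1 u2. unfold Lam, N1. fold l1 l2.
    pose proof (Rabs_triang (l1 * u1) (- (l2 * u2))). pose proof (Rabs_triang (l1 * u2) (l2 * u1)).
    rewrite Rabs_Ropp in *. rewrite !Rabs_mult in *.
    pose proof (Rabs_pos l1). pose proof (Rabs_pos l2). pose proof (Rabs_pos u1). pose proof (Rabs_pos u2).
    unfold Rminus. nra. }
  assert (IND : forall n s, inI a b s -> s <= x0 -> Nv s <= Vb * Lam ^ n * Fq n s).
  { induction n.
    - intros s Hs0 Hsx. unfold Fq. simpl. replace (Vb * 1 * (1 / 1)) with Vb by field. auto.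
    - assert (HNP : forall s, inI a b s -> s <= x0 -> NP s <= Vb * Lam ^ S n * (Rf s * Fq n s)).
      { intros s Hs0 Hsx. apply (lim_le _ _ NP s Hs0); [intros t Ht Hts|exact LNP].
        assert (E1 : P1 s - P1 t = RInt (fun y => - (r y * (l1 * v1 y - l2 * v2 y))) t s).
        { symmetry. apply (FTC_I a b); auto. intros y Hy. apply copp. apply cmul; auto.
          apply cminus; apply cmul; auto; apply cconst. }
        assert (E2 : P2 s - P2 t = RInt (fun y => - (r y * (l1 * v2 y + l2 * v1 y))) t s).
        { symmetry. apply (FTC_I a b); auto. intros y Hy. apply copp. apply cmul; auto.
          apply cplus; apply cmul; auto; apply cconst. }
        assert (Cf1 : forall y, inI a b y -> continuous (fun y => - (r y * (l1 * v1 y - l2 * v2 y))) y).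
        { intros y Hy. apply copp. apply cmul; auto. apply cminus; apply cmul; auto; apply cconst. }
        assert (Cf2 : forall y, inI a b y -> continuous (fun y => - (r y * (l1 * v2 y + l2 * v1 y))) y).
        { intros y Hy. apply copp. apply cmul; auto. apply cplus; apply cmul; auto; apply cconst. }
        pose proof (abs_RInt_I _ t s Cf1 Ht Hs0 Hts) as A1.
        pose proof (abs_RInt_I _ t s Cf2 Ht Hs0 Hts) as A2.
        assert (A3 : RInt (fun y => Rabs (- (r y * (l1 * v1 y - l2 * v2 y)))) t s +
                     RInt (fun y => Rabs (- (r y * (l1 * v2 y + l2 * v1 y)))) t s <=
                     Vb * Lam ^ S n * (Rf s * Fq n s)).
        { rewrite <- RInt_plusR by (apply (ex_RInt_I a b); auto; intros; apply cabs; auto).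
          apply Rle_trans with (RInt (fun y => (Vb * Lam ^ S n * Fq n s) * r1 y) t s).
          - apply (RInt_le_I a b); auto.
            intros; apply cplus; apply cabs; auto.
            intros; apply cmul. apply cconst. apply cont_r1; auto.
            intros y Hy Hyy. rewrite !Rabs_Ropp, !Rabs_mult. pose proof (Hr y Hy).
            rewrite Rabs_right by lra. unfold r1; simpl.
            specialize (Hlam (v1 y) (v2 y)). specialize (IHn y Hy ltac:(lra)). fold (Nv y) in Hlam.
            pose proof (Fq_mono n s y Hs0 Hy ltac:(lra)).
            assert (Nv y <= Vb * Lam ^ n * Fq n s).
            { eapply Rle_trans. exact IHn. apply Rmult_le_compat_l; auto.
              apply Rmult_le_pos; auto. apply pow_le; auto. }
            assert (Lam * Nv y <= Lam * (Vb * Lam ^ n * Fq n s)) by (apply Rmult_le_compat_l; auto).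
            simpl pow.
            replace (Vb * (Lam * Lam ^ n) * Fq n s * (r y * 1)) with (r y * (Lam * (Vb * Lam ^ n * Fq n s))) by ring.
            rewrite <- Rmult_plus_distr_l. apply Rmult_le_compat_l; lra.
          - rewrite RInt_scalR by (apply (ex_RInt_I a b); auto; apply cont_r1).
            rewrite Rf_diff; auto.
            assert (0 <= Vb * Lam ^ S n * Fq n s).
            { apply Rmult_le_pos; [apply Rmult_le_pos|]; auto. apply pow_le; auto. apply Fq_nonneg; auto. }
            pose proof (Rf_nonneg t Ht).
            replace (Vb * Lam ^ S n * (Rf s * Fq n s)) with (Vb * Lam ^ S n * Fq n s * Rf s) by ring.
            assert (0 <= Vb * Lam ^ S n * Fq n s * Rf t) by (apply Rmult_le_pos; auto). nra. }
        assert (A1' : Rabs (P1 s - P1 t) <= RInt (fun y => Rabs (- (r y * (l1 * v1 y - l2 * v2 y)))) t s) by (rewrite E1; exact A1).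
        assert (A2' : Rabs (P2 s - P2 t) <= RInt (fun y => Rabs (- (r y * (l1 * v2 y + l2 * v1 y)))) t s) by (rewrite E2; exact A2).
        clear A1 A2. unfold NP.
        pose proof (Rabs_triang (P1 s - P1 t) (P1 t)). pose proof (Rabs_triang (P2 s - P2 t) (P2 t)).
        replace (P1 s - P1 t + P1 t) with (P1 s) in * by ring.
        replace (P2 s - P2 t + P2 t) with (P2 s) in * by ring. lra. }
      intros s Hs0 Hsx. apply (lim_le _ _ Nv s Hs0); [intros t Ht Hts|exact LNv].
      assert (E1 : v1 s - v1 t = RInt d1 t s) by (symmetry; apply (FTC_I a b); auto).
      assert (E2 : v2 s - v2 t = RInt d2 t s) by (symmetry; apply (FTC_I a b); auto).
      pose proof (abs_RInt_I _ t s Cd1 Ht Hs0 Hts) as A1.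
      pose proof (abs_RInt_I _ t s Cd2 Ht Hs0 Hts) as A2.
      assert (A3 : RInt (fun y => Rabs (d1 y)) t s + RInt (fun y => Rabs (d2 y)) t s <=
                   Vb * Lam ^ S n * Fq (S n) s).
      { rewrite <- RInt_plusR by (apply (ex_RInt_I a b); auto; intros; apply cabs; auto).
        apply Rle_trans with (RInt (fun y => (Vb * Lam ^ S n) * (q0 y * Fq n y)) t s).
        - apply (RInt_le_I a b); auto.
          intros; apply cplus; apply cabs; auto.
          intros; apply cmul. apply cconst. apply cmul. apply cont_q0; auto. apply Fq_cont; auto.
          intros y Hy Hyy. rewrite (Ed1 y Hy), (Ed2 y Hy). pose proof (Hp y Hy).
          unfold Rdiv. rewrite !Rabs_mult. rewrite (Rabs_right (/ p y)) by (apply Rle_ge; left; apply Rinv_0_lt_compat; auto).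
          specialize (HNP y Hy ltac:(lra)). unfold NP in HNP. unfold q0, Rdiv.
          replace (Vb * Lam ^ S n * (Rf y * / p y * Fq n y)) with ((Vb * Lam ^ S n * (Rf y * Fq n y)) * / p y) by ring.
          rewrite <- Rmult_plus_distr_r. apply Rmult_le_compat_r. left; apply Rinv_0_lt_compat; auto. auto.
        - rewrite RInt_scalR. rewrite (FTC_I a b (Fq (S n)) (fun y => q0 y * Fq n y)); auto.
          pose proof (Fq_nonneg (S n) t Ht).
          assert (0 <= Vb * Lam ^ S n) by (apply Rmult_le_pos; auto; apply pow_le; auto). nra.
          intros; apply Fq_deriv; auto. intros; apply cmul. apply cont_q0; auto. apply Fq_cont; auto.
          apply (ex_RInt_I a b); auto. intros; apply cmul. apply cont_q0; auto. apply Fq_cont; auto. }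
      assert (A1' : Rabs (v1 s - v1 t) <= RInt (fun y => Rabs (d1 y)) t s) by (rewrite E1; exact A1).
      assert (A2' : Rabs (v2 s - v2 t) <= RInt (fun y => Rabs (d2 y)) t s) by (rewrite E2; exact A2).
      clear A1 A2. unfold Nv.
      pose proof (Rabs_triang (v1 s - v1 t) (v1 t)). pose proof (Rabs_triang (v2 s - v2 t) (v2 t)).
      replace (v1 s - v1 t + v1 t) with (v1 s) in * by ring.
      replace (v2 s - v2 t + v2 t) with (v2 s) in * by ring. lra. }
  assert (HN0 : Nv x0 <= 0).
  { apply Rnot_lt_le. intros Hpos.
    pose proof (cv_speed_pow_fact (Lam * Q x0)) as Hcv.
    destruct (Hcv (Nv x0 / (Vb + 1))) as [N HN]. apply Rdiv_lt_0_compat; lra.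
    specialize (HN N (le_n N)). unfold Rdist in HN. rewrite Rminus_0_r in HN.
    specialize (IND N x0 Hx0 (Rle_refl x0)).
    unfold Fq in IND. rewrite Rpow_mult_distr in HN.
    assert (0 <= Lam ^ N * Q x0 ^ N / INR (fact N)).
    { apply Rmult_le_pos. apply Rmult_le_pos; apply pow_le; auto. apply Q_nonneg; auto.
      left; apply Rinv_0_lt_compat, INR_fact_lt_0. }
    rewrite Rabs_right in HN by lra.
    replace (Vb * Lam ^ N * (Q x0 ^ N / INR (fact N))) with (Vb * (Lam ^ N * Q x0 ^ N / INR (fact N))) in IND by (unfold Rdiv; ring).
    assert (Vb * (Lam ^ N * Q x0 ^ N / INR (fact N)) <= Vb * (Nv x0 / (Vb + 1))) by (apply Rmult_le_compat_l; lra).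
    assert (Vb * (Nv x0 / (Vb + 1)) < Nv x0).
    { apply (Rmult_lt_reg_r (Vb + 1)). lra. unfold Rdiv.
      replace (Vb * (Nv x0 * / (Vb + 1)) * (Vb + 1)) with (Vb * Nv x0) by (field; lra). nra. }
    lra. }
  assert (Hv1 : v1 x0 = 0). { unfold Nv in HN0. pose proof (Rabs_pos (v1 x0)). pose proof (Rabs_pos (v2 x0)).
    apply Rabs_eq_0. lra. }
  assert (Hv2 : v2 x0 = 0). { unfold Nv in HN0. pose proof (Rabs_pos (v1 x0)). pose proof (Rabs_pos (v2 x0)).
    apply Rabs_eq_0. lra. }
  unfold v1, v2 in Hv1, Hv2. destruct (w x0) as [w1 w2], (W x0) as [W1 W2]. cbn [fst snd] in *.
  f_equal; lra.
Qed.
End Main.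


Lemma Rint_RInt (f : R -> R) u v : ex_RInt f u v -> Rint f u v = RInt f u v.
Proof.
  intros H. unfold Rint.
  pose proof (ex_RInt_Reals_0 f u v H) as pr.
  destruct (epsilon_spec (inhabits 0) (fun I => exists pr : Riemann_integrable f u v, RiemannInt pr = I))
    as [pr' Hpr'].
  { exists (RiemannInt pr). exists pr. reflexivity. }
  rewrite <- Hpr'. symmetry. apply RInt_Reals.
Qed.

Lemma cont_of_deriv a b (f : R -> R) : loc_AC_with_AC_deriv a b f -> forall x, inI a b x -> continuous f x.
Proof.
  intros [_ [f' [Hd _]]] x Hx. eapply dcont. apply is_derive_Reals. apply Hd; auto.
Qed.

Theorem mainTheorem1 (a b : option R) (p r : R -> R)
  (hab : forall a0 b0, a = Some a0 -> b = Some b0 -> a0 < b0)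
  (hp : forall x, inI a b x -> 0 < p x)
  (hr : forall x, inI a b x -> 0 < r x)
  (hpAC : loc_AC_with_AC_deriv a b p)
  (hrAC : loc_AC_with_AC_deriv a b r)
  (hint : integrability_hyp a b p r) :
  exists W : Cplx -> R -> Cplx,
    (forall lam : Cplx,
       solves_bvp a b p r lam (W lam) /\
       forall w, solves_bvp a b p r lam w -> forall x, inI a b x -> w x = W lam x) /\
    (forall x, inI a b x ->
       entire (fun lam => W lam x) /\ exponential_type (fun lam => W lam x)).
Proof.
  pose proof (cont_of_deriv a b p hpAC) as Hcp.
  pose proof (cont_of_deriv a b r hrAC) as Hcr.
  destruct hint as [c [Hc [M HM0]]].
  assert (Hinv : forall x, inI a b x -> continuous (fun s => / p s) x).
  { intros x Hx. apply cinv; auto. specialize (hp x Hx); lra. }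
  assert (HM : forall t, inI a b t -> t <= c ->
    RInt (fun y => RInt (fun s => / p s) y c * r y) t c <= M).
  { intros t Ht Htc. specialize (HM0 t Ht Htc).
    assert (Hcont : forall y, inI a b y -> continuous (fun y => RInt (fun s => / p s) y c * r y) y).
    { intros y Hy. apply cmul; auto. eapply dcont. apply (derive_RInt_I' a b (fun s => / p s)); auto. }
    assert (Hext : forall y, Rmin t c < y < Rmax t c ->
        RInt (fun s => / p s) y c * r y = Rint (fun x => / p x) y c * r y).
    { intros y Hy. rewrite Rint_RInt. reflexivity. apply (ex_RInt_I a b); auto.
      apply (inI_conv2 a b t c); auto; lra. }
    rewrite Rint_RInt in HM0.
    - rewrite <- (RInt_ext _ _ t c Hext) in HM0. exact HM0.
    - apply (ex_RInt_ext (fun y => RInt (fun s => / p s) y c * r y)). exact Hext.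
      apply (ex_RInt_I a b); auto. }
  exists (Wsol a b p r). split.
  - intros lam. split.
    + exists (dWsol a b p r lam). split. exact (Wsol_solves a b p r c M hp hr Hcp Hcr Hc HM lam).
      split. exact (Wsol_lim1 a b p r c M hp hr Hcp Hcr Hc HM lam).
      exact (Wsol_lim0 a b p r c M hp hr Hcp Hcr Hc HM lam).
    + intros w Hw. destruct Hw as [dw [H1 [H2 H3]]]. intros xx Hxx.
      exact (uniq a b p r c M hp hr Hcp Hcr Hc HM lam w dw H1 H2 H3 xx Hxx).
  - intros xx Hxx. exact (Wsol_entire a b p r c M hp hr Hcp Hcr Hc HM xx Hxx).
Qed.
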